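(* Let $\varphi:\mathbb B\to\mathbb B$ be a slice regular function with $\varphi(0)=0$. Then the operators $C_\varphi f=f^{\odot}\varphi$ and $D_\varphi f=f_{\odot}\varphi$ are bounded on $H^2(\mathbb B)$ and $\|C_\varphi\|=\|D_\varphi\|=1$.
   Context: $\mathbb H$ quaternions, $\mathbb S=\{q:q^2=-1\}$, $\mathbb C_I=\mathbb R+I\mathbb R$, $\mathbb B$ the open unit ball of $\mathbb H$. A function on a domain $\Omega$ is slice regular if on each $\Omega\cap\mathbb C_I$ it is $C^1$ and annihilated by $\frac12(\partial_x+I\partial_y)$; regular functions on $\mathbb B$ are exactly convergent power series $\sum_n q^na_n$. The $\ast$-product of power series is $\big(\sum q^na_n\big)\ast\big(\sum q^nb_n\big)=\sum_n q^n\sum_{k=0}^na_kb_{n-k}$, $\varphi^{\ast0}=1$, $\varphi^{\ast n}=\varphi\ast\varphi^{\ast(n-1)}$. For $f(q)=\sum q^na_n$ regular on $\mathbb B$ and $\varphi:\mathbb B\to\mathbb B$ regular: $f^{\odot}\varphi=\sum_n\varphi^{\ast n}a_n$, $f_{\odot}\varphi=\sum_n a_n\ast\varphi^{\ast n}$. $H^2(\mathbb B)$ is the space of regular $f=\sum q^na_n$ on $\mathbb B$ with $\|f\|_2^2=\sum|a_n|^2<\infty$ (equivalently $\|f\|_2=\sup_{I\in\mathbb S}\lim_{r\to1^-}(\frac1{2\pi}\int_{-\pi}^\pi|f(re^{I\theta})|^2d\theta)^{1/2}$). Operator norm: $\|T\|=\sup\{\|Tf\|_2:\|f\|_2\le1\}$.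 *)

(* Defs.v *)
From Stdlib Require Import Reals.
Open Scope R_scope.

Record H := mkH { q0 : R; q1 : R; q2 : R; q3 : R }.

Definition qzero : H := mkH 0 0 0 0.
Definition qone  : H := mkH 1 0 0 0.
Definition qadd (x y : H) : H :=
  mkH (q0 x + q0 y) (q1 x + q1 y) (q2 x + q2 y) (q3 x + q3 y).
Definition qsub (x y : H) : H :=
  mkH (q0 x - q0 y) (q1 x - q1 y) (q2 x - q2 y) (q3 x - q3 y).
(* Hamilton product, i^2 = j^2 = k^2 = ijk = -1 *)
Definition qmul (x y : H) : H :=
  mkH (q0 x * q0 y - q1 x * q1 y - q2 x * q2 y - q3 x * q3 y)
      (q0 x * q1 y + q1 x * q0 y + q2 x * q3 y - q3 x * q2 y)
      (q0 x * q2 y - q1 x * q3 y + q2 x * q0 y + q3 x * q1 y)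
      (q0 x * q3 y + q1 x * q2 y - q2 x * q1 y + q3 x * q0 y).
Definition qnorm (x : H) : R :=
  sqrt (q0 x ^ 2 + q1 x ^ 2 + q2 x ^ 2 + q3 x ^ 2).

Fixpoint qpow (x : H) (n : nat) : H :=
  match n with O => qone | S m => qmul x (qpow x m) end.

Fixpoint qsum (f : nat -> H) (n : nat) : H :=
  match n with O => f O | S m => qadd (qsum f m) (f (S m)) end.

Definition qcv (u : nat -> H) (l : H) : Prop :=
  forall eps, eps > 0 -> exists N, forall n, (n >= N)%nat -> qnorm (qsub (u n) l) < eps.

(* A (formal) power series sum_n q^n a_n is given by its coefficients a : nat -> H. *)
Definition psum (a : nat -> H) (q : H) (N : nat) : H :=
  qsum (fun n => qmul (qpow q n) (a n)) N.

Definition ps_value (a : nat -> H) (q : H) (l : H) : Prop := qcv (psum a q) l.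

(* regular on the open unit ball B = convergent power series on B *)
Definition regular_on_B (a : nat -> H) : Prop :=
  forall q, qnorm q < 1 -> exists l, ps_value a q l.

Definition regular_B_to_B (a : nat -> H) : Prop :=
  forall q, qnorm q < 1 -> exists l, ps_value a q l /\ qnorm l < 1.

Definition star (a b : nat -> H) : nat -> H :=
  fun n => qsum (fun k => qmul (a k) (b (n - k)%nat)) n.

Fixpoint starpow (b : nat -> H) (n : nat) : nat -> H :=
  match n with
  | O => fun m => match m with O => qone | S _ => qzero end
  | S k => star b (starpow b k)
  end.

(* f^{odot} phi = sum_n phi^{*n} a_n, coefficientwise.  Since phi(0)=0, the
   series phi^{*n} has no terms of degree < n, so the coefficient of q^m only
   receives contributions from n <= m. *)
Definition Cop (b a : nat -> H) : nat -> H :=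
  fun m => qsum (fun n => qmul (starpow b n m) (a n)) m.

Definition Dop (b a : nat -> H) : nat -> H :=
  fun m => qsum (fun n => qmul (a n) (starpow b n m)) m.

Definition H2norm_is (a : nat -> H) (r : R) : Prop :=
  0 <= r /\ Un_cv (sum_f_R0 (fun n => qnorm (a n) ^ 2)) (r ^ 2).

Definition in_H2 (a : nat -> H) : Prop :=
  regular_on_B a /\ exists r, H2norm_is a r.

Definition opnorm_set (T : (nat -> H) -> (nat -> H)) (r : R) : Prop :=
  exists a ra, in_H2 a /\ H2norm_is a ra /\ ra <= 1 /\ H2norm_is (T a) r.

(* Main.v *)
Require Import Defs.
From Stdlib Require Import Reals Lra Lia Psatz FunctionalExtensionality.
Open Scope R_scope.

Lemma Hext (x y : H) : q0 x = q0 y -> q1 x = q1 y -> q2 x = q2 y -> q3 x = q3 y -> x = y.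
Proof. destruct x, y; simpl; intros; subst; reflexivity. Qed.

Ltac qeq := repeat match goal with x : H |- _ => destruct x end;
  apply Hext; unfold qadd, qsub, qmul, qzero, qone in *; simpl; ring.

Definition qconj (x : H) : H := mkH (q0 x) (- q1 x) (- q2 x) (- q3 x).
Definition qn2 (x : H) : R := q0 x * q0 x + q1 x * q1 x + q2 x * q2 x + q3 x * q3 x.
Definition qdot (x y : H) : R := q0 x * q0 y + q1 x * q1 y + q2 x * q2 y + q3 x * q3 y.
Definition qscal (r : R) (x : H) : H := mkH (r * q0 x) (r * q1 x) (r * q2 x) (r * q3 x).
Definition qopp (x : H) : H := mkH (- q0 x) (- q1 x) (- q2 x) (- q3 x).
Definition qR (r : R) : H := mkH r 0 0 0.
Definition qi : H := mkH 0 1 0 0.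
Definition qj : H := mkH 0 0 1 0.

Ltac qeq2 := repeat match goal with x : H |- _ => destruct x end;
  apply Hext; unfold qadd, qsub, qmul, qzero, qone, qconj, qscal, qopp, qR, qi, qj in *; simpl; ring.

Lemma qadd_comm x y : qadd x y = qadd y x. Proof. qeq. Qed.
Lemma qadd_assoc x y z : qadd x (qadd y z) = qadd (qadd x y) z. Proof. qeq. Qed.
Lemma qadd_0_l x : qadd qzero x = x. Proof. qeq. Qed.
Lemma qadd_0_r x : qadd x qzero = x. Proof. qeq. Qed.
Lemma qmul_assoc x y z : qmul x (qmul y z) = qmul (qmul x y) z. Proof. qeq. Qed.
Lemma qmul_addl x y z : qmul (qadd x y) z = qadd (qmul x z) (qmul y z). Proof. qeq. Qed.
Lemma qmul_addr x y z : qmul x (qadd y z) = qadd (qmul x y) (qmul x z). Proof. qeq. Qed.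
Lemma qmul_0_l x : qmul qzero x = qzero. Proof. qeq. Qed.
Lemma qmul_0_r x : qmul x qzero = qzero. Proof. qeq. Qed.
Lemma qmul_1_l x : qmul qone x = x. Proof. qeq. Qed.
Lemma qmul_1_r x : qmul x qone = x. Proof. qeq. Qed.
Lemma qconj_mul x y : qconj (qmul x y) = qmul (qconj y) (qconj x). Proof. qeq2. Qed.
Lemma qconj_add x y : qconj (qadd x y) = qadd (qconj x) (qconj y). Proof. qeq2. Qed.
Lemma qconj_0 : qconj qzero = qzero. Proof. apply Hext; simpl; ring. Qed.
Lemma qconj_1 : qconj qone = qone. Proof. apply Hext; simpl; ring. Qed.
Lemma qconj_conj x : qconj (qconj x) = x. Proof. qeq2. Qed.

Lemma qn2_mul x y : qn2 (qmul x y) = qn2 x * qn2 y.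
Proof. destruct x, y; unfold qn2, qmul; simpl; ring. Qed.
Lemma qn2_conj x : qn2 (qconj x) = qn2 x.
Proof. destruct x; unfold qn2, qconj; simpl; ring. Qed.
Lemma qn2_ge0 x : 0 <= qn2 x.
Proof. unfold qn2; nra. Qed.
Lemma qn2_zero : qn2 qzero = 0. Proof. unfold qn2; simpl; ring. Qed.
Lemma qn2_eq0 x : qn2 x = 0 -> x = qzero.
Proof. destruct x; unfold qn2; simpl; intro E. apply Hext; simpl; nra. Qed.
Lemma qnorm_sqrt x : qnorm x = sqrt (qn2 x).
Proof. unfold qnorm, qn2; f_equal; ring. Qed.
Lemma qnorm_ge0 x : 0 <= qnorm x. Proof. apply sqrt_pos. Qed.
Lemma qnorm_sq x : qnorm x ^ 2 = qn2 x.
Proof. rewrite qnorm_sqrt. rewrite <- Rsqr_pow2. apply Rsqr_sqrt, qn2_ge0. Qed.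
Lemma qnorm_mul x y : qnorm (qmul x y) = qnorm x * qnorm y.
Proof. rewrite !qnorm_sqrt, qn2_mul. apply sqrt_mult; apply qn2_ge0. Qed.
Lemma qnorm_conj x : qnorm (qconj x) = qnorm x.
Proof. rewrite !qnorm_sqrt, qn2_conj; auto. Qed.

Lemma qdot_self x : qdot x x = qn2 x. Proof. reflexivity. Qed.
Lemma qn2_add x y : qn2 (qadd x y) = qn2 x + 2 * qdot x y + qn2 y.
Proof. destruct x, y; unfold qn2, qdot, qadd; simpl; ring. Qed.
Lemma qdot_cs x y : qdot x y <= qnorm x * qnorm y.
Proof.
  rewrite !qnorm_sqrt, <- sqrt_mult by apply qn2_ge0.
  destruct (Rle_or_lt (qdot x y) 0) as [h|h].
  - pose proof (sqrt_pos (qn2 x * qn2 y)); lra.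
  - rewrite <- (sqrt_pow2 (qdot x y)) by lra. apply sqrt_le_1_alt.
    destruct x as [a0 a1 a2 a3], y as [b0 b1 b2 b3]; unfold qdot, qn2; simpl.
    assert (E : (a0*a0+a1*a1+a2*a2+a3*a3)*(b0*b0+b1*b1+b2*b2+b3*b3) - (a0*b0+a1*b1+a2*b2+a3*b3)^2
      = (a0*b1-a1*b0)^2+(a0*b2-a2*b0)^2+(a0*b3-a3*b0)^2+(a1*b2-a2*b1)^2+(a1*b3-a3*b1)^2+(a2*b3-a3*b2)^2) by ring.
    pose proof (pow2_ge_0 (a0*b1-a1*b0)); pose proof (pow2_ge_0 (a0*b2-a2*b0));
    pose proof (pow2_ge_0 (a0*b3-a3*b0)); pose proof (pow2_ge_0 (a1*b2-a2*b1));
    pose proof (pow2_ge_0 (a1*b3-a3*b1)); pose proof (pow2_ge_0 (a2*b3-a3*b2)). lra.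
Qed.
Lemma qnorm_triang x y : qnorm (qadd x y) <= qnorm x + qnorm y.
Proof.
  rewrite (qnorm_sqrt (qadd x y)). pose proof (qnorm_ge0 x). pose proof (qnorm_ge0 y).
  rewrite <- (sqrt_pow2 (qnorm x + qnorm y)) by lra. apply sqrt_le_1_alt.
  rewrite qn2_add, <- (qnorm_sq x), <- (qnorm_sq y). pose proof (qdot_cs x y). nra.
Qed.
Lemma qn2_le_qnorm x c : 0 <= c -> qn2 x <= c * c -> qnorm x <= c.
Proof. intros h1 h2. rewrite qnorm_sqrt, <- (sqrt_square c) by lra. apply sqrt_le_1_alt; lra. Qed.
Lemma qnorm_le_qn2 x c : qnorm x <= c -> qn2 x <= c * c.
Proof. intro h. rewrite <- qnorm_sq. pose proof (qnorm_ge0 x). nra. Qed.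
Lemma qnorm_sub_comm x y : qnorm (qsub x y) = qnorm (qsub y x).
Proof. rewrite !qnorm_sqrt; f_equal; destruct x, y; unfold qn2, qsub; simpl; ring. Qed.
Lemma qsub_add x y : qsub x y = qadd x (qopp y). Proof. qeq2. Qed.
Lemma qnorm_opp x : qnorm (qopp x) = qnorm x.
Proof. rewrite !qnorm_sqrt; f_equal; destruct x; unfold qn2, qopp; simpl; ring. Qed.
Lemma qnorm_comp0 x : Rabs (q0 x) <= qnorm x.
Proof. rewrite qnorm_sqrt, <- sqrt_Rsqr_abs. apply sqrt_le_1_alt. unfold Rsqr, qn2. nra. Qed.
Lemma qnorm_comp1 x : Rabs (q1 x) <= qnorm x.
Proof. rewrite qnorm_sqrt, <- sqrt_Rsqr_abs. apply sqrt_le_1_alt. unfold Rsqr, qn2. nra. Qed.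
Lemma qnorm_comp2 x : Rabs (q2 x) <= qnorm x.
Proof. rewrite qnorm_sqrt, <- sqrt_Rsqr_abs. apply sqrt_le_1_alt. unfold Rsqr, qn2. nra. Qed.
Lemma qnorm_comp3 x : Rabs (q3 x) <= qnorm x.
Proof. rewrite qnorm_sqrt, <- sqrt_Rsqr_abs. apply sqrt_le_1_alt. unfold Rsqr, qn2. nra. Qed.

Lemma qsum_ext_le f g n : (forall i, (i <= n)%nat -> f i = g i) -> qsum f n = qsum g n.
Proof. induction n; simpl; intros h. - apply h; lia. - rewrite IHn, h; auto. Qed.
Lemma qsum_add f g n : qsum (fun i => qadd (f i) (g i)) n = qadd (qsum f n) (qsum g n).
Proof. induction n; simpl; auto. rewrite IHn. qeq. Qed.
Lemma qsum_mul_l c f n : qmul c (qsum f n) = qsum (fun i => qmul c (f i)) n.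
Proof. induction n; simpl; auto. rewrite qmul_addr, IHn; auto. Qed.
Lemma qsum_mul_r c f n : qmul (qsum f n) c = qsum (fun i => qmul (f i) c) n.
Proof. induction n; simpl; auto. rewrite qmul_addl, IHn; auto. Qed.
Lemma qsum_zero f n : (forall i, (i <= n)%nat -> f i = qzero) -> qsum f n = qzero.
Proof. induction n; simpl; intros h. - apply h; lia. - rewrite IHn by (intros; apply h; lia). rewrite h by lia. apply qadd_0_l. Qed.
Lemma qsum_extend f n m : (n <= m)%nat -> (forall i, (n < i <= m)%nat -> f i = qzero) -> qsum f m = qsum f n.
Proof.
  intros hle; induction hle; intros h; auto.
  simpl. rewrite h by lia. rewrite qadd_0_r. apply IHhle. intros; apply h; lia.
Qed.
Lemma qsum_shift f n : qsum f (S n) = qadd (f 0%nat) (qsum (fun i => f (S i)) n).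
Proof. induction n. simpl; auto. change (qsum f (S (S n))) with (qadd (qsum f (S n)) (f (S (S n)))).
  rewrite IHn. simpl. apply eq_sym, qadd_assoc. Qed.
Lemma qsum_swap F n m : qsum (fun i => qsum (fun j => F i j) m) n = qsum (fun j => qsum (fun i => F i j) n) m.
Proof.
  induction n; simpl. - auto.
  - rewrite IHn. rewrite <- qsum_add. auto.
Qed.
Lemma qsum_triangle F N :
  qsum (fun n => qsum (fun k => F k (n - k)%nat) n) N = qsum (fun k => qsum (fun l => F k l) (N - k)) N.
Proof.
  induction N. - simpl. auto.
  - change (qsum (fun n => qsum (fun k => F k (n - k)%nat) n) (S N)) with
      (qadd (qsum (fun n => qsum (fun k => F k (n - k)%nat) n) N) (qsum (fun k => F k (S N - k)%nat) (S N))).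
    rewrite IHN. clear IHN.
    change (qsum (fun k => qsum (fun l => F k l) (S N - k)) (S N)) with
      (qadd (qsum (fun k => qsum (fun l => F k l) (S N - k)) N) (qsum (fun l => F (S N) l) (S N - S N))).
    change (qsum (fun k => F k (S N - k)%nat) (S N)) with (qadd (qsum (fun k => F k (S N - k)%nat) N) (F (S N) (S N - S N)%nat)).
    replace (S N - S N)%nat with 0%nat by lia.
    change (qsum (fun l => F (S N) l) 0) with (F (S N) 0%nat).
    rewrite qadd_assoc. f_equal.
    rewrite <- qsum_add. apply qsum_ext_le. intros i hi.
    replace (S N - i)%nat with (S (N - i)) by lia. reflexivity.
Qed.
Lemma qsum_rev f n : qsum f n = qsum (fun k => f (n - k)%nat) n.
Proof.
  induction n. simpl; auto.
  rewrite (qsum_shift (fun k => f (S n - k)%nat)).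
  change (qsum f (S n)) with (qadd (qsum f n) (f (S n))).
  rewrite IHn, qadd_comm. replace (S n - 0)%nat with (S n) by lia. f_equal.
Qed.
Lemma qsum_conj f n : qconj (qsum f n) = qsum (fun i => qconj (f i)) n.
Proof. induction n; simpl; auto. rewrite qconj_add, IHn; auto. Qed.
Lemma qsum_comp0 f n : q0 (qsum f n) = sum_f_R0 (fun i => q0 (f i)) n.
Proof. induction n; simpl; auto. rewrite IHn; auto. Qed.
Lemma qsum_comp1 f n : q1 (qsum f n) = sum_f_R0 (fun i => q1 (f i)) n.
Proof. induction n; simpl; auto. rewrite IHn; auto. Qed.
Lemma qsum_comp2 f n : q2 (qsum f n) = sum_f_R0 (fun i => q2 (f i)) n.
Proof. induction n; simpl; auto. rewrite IHn; auto. Qed.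
Lemma qsum_comp3 f n : q3 (qsum f n) = sum_f_R0 (fun i => q3 (f i)) n.
Proof. induction n; simpl; auto. rewrite IHn; auto. Qed.
Lemma qnorm_qsum f n : qnorm (qsum f n) <= sum_f_R0 (fun i => qnorm (f i)) n.
Proof. induction n; simpl. lra. eapply Rle_trans. apply qnorm_triang. lra. Qed.
Lemma qdot_addl x y z : qdot (qadd x y) z = qdot x z + qdot y z.
Proof. destruct x, y, z; unfold qdot, qadd; simpl; ring. Qed.
Lemma qdot_comm x y : qdot x y = qdot y x.
Proof. unfold qdot; ring. Qed.
Lemma qdot_suml f n y : qdot (qsum f n) y = sum_f_R0 (fun i => qdot (f i) y) n.
Proof. induction n; simpl; auto. rewrite qdot_addl, IHn; auto. Qed.
Lemma qn2_qsum f n : qn2 (qsum f n) = sum_f_R0 (fun i => sum_f_R0 (fun k => qdot (f i) (f k)) n) n.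
Proof.
  rewrite <- qdot_self, qdot_suml. apply sum_eq. intros i _.
  rewrite qdot_comm, qdot_suml. apply sum_eq. intros; apply qdot_comm.
Qed.

Lemma sum_ext_le (f g : nat -> R) n : (forall i, (i <= n)%nat -> f i = g i) -> sum_f_R0 f n = sum_f_R0 g n.
Proof. intros; apply sum_eq; auto. Qed.
Lemma sum_swap (F : nat -> nat -> R) n m :
  sum_f_R0 (fun i => sum_f_R0 (fun j => F i j) m) n = sum_f_R0 (fun j => sum_f_R0 (fun i => F i j) n) m.
Proof.
  induction n; simpl. auto.
  rewrite IHn, <- sum_plus. auto.
Qed.
Lemma sum_scal_l c (f : nat -> R) n : c * sum_f_R0 f n = sum_f_R0 (fun i => c * f i) n.
Proof. induction n; simpl; auto. rewrite <- IHn; ring. Qed.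
Lemma sum_zero (f : nat -> R) n : (forall i, (i <= n)%nat -> f i = 0) -> sum_f_R0 f n = 0.
Proof. induction n; simpl; intros h. apply h; lia. rewrite IHn, h; auto; lra. Qed.
Lemma sum_le (f g : nat -> R) n : (forall i, (i <= n)%nat -> f i <= g i) -> sum_f_R0 f n <= sum_f_R0 g n.
Proof. induction n; simpl; intros h. apply h; lia. pose proof (h (S n) (le_n _)). pose proof (IHn (fun i hi => h i (le_S _ _ hi))). lra. Qed.
Lemma sum_ge0 (f : nat -> R) n : (forall i, (i <= n)%nat -> 0 <= f i) -> 0 <= sum_f_R0 f n.
Proof. intros h. rewrite <- (sum_zero (fun _ => 0) n) by auto. apply sum_le; auto. Qed.
Lemma sum_mono (f : nat -> R) n m : (forall i, 0 <= f i) -> (n <= m)%nat -> sum_f_R0 f n <= sum_f_R0 f m.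
Proof. intros h hle; induction hle; simpl. lra. pose proof (h (S m)). lra. Qed.
Lemma sum_single (f : nat -> R) n k : (k <= n)%nat -> (forall i, (i <= n)%nat -> i <> k -> f i = 0) -> sum_f_R0 f n = f k.
Proof.
  induction n; simpl; intros hk h.
  - assert (k = 0%nat) by lia; subst; auto.
  - destruct (Nat.eq_dec k (S n)).
    + subst. rewrite sum_zero. lra. intros; apply h; lia.
    + rewrite IHn; [ | lia | intros; apply h; lia]. rewrite (h (S n)) by lia. lra.
Qed.

Lemma star_assoc a b c n : star (star a b) c n = star a (star b c) n.
Proof.
  unfold star.
  pose (F := fun i l => qmul (a i) (qmul (b l) (c (n - (i + l))%nat))).
  transitivity (qsum (fun k => qsum (fun i => F i (k - i)%nat) k) n).
  - apply qsum_ext_le; intros k hk. rewrite qsum_mul_r. apply qsum_ext_le; intros i hi.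
    unfold F. rewrite qmul_assoc. do 3 f_equal. lia.
  - rewrite (qsum_triangle F). unfold F. apply qsum_ext_le; intros i hi.
    rewrite qsum_mul_l. apply qsum_ext_le; intros j hj. do 3 f_equal. lia.
Qed.

Lemma star_ext a a' b b' n : (forall i, (i <= n)%nat -> a i = a' i) -> (forall i, (i <= n)%nat -> b i = b' i) ->
  star a b n = star a' b' n.
Proof. intros ha hb. unfold star. apply qsum_ext_le; intros. rewrite ha, hb by lia; auto. Qed.

Definition delta0 : nat -> H := fun m => match m with 0%nat => qone | S _ => qzero end.
Lemma star_delta_l a m : star delta0 a m = a m.
Proof.
  unfold star. rewrite (qsum_extend _ 0 m). simpl. rewrite qmul_1_l. f_equal; lia. lia.
  intros i hi. destruct i. lia. apply qmul_0_l.
Qed.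
Lemma star_delta_r a m : star a delta0 m = a m.
Proof.
  unfold star. rewrite qsum_rev.
  rewrite (qsum_ext_le _ (fun k => qmul (a (m - k)%nat) (delta0 k))).
  rewrite (qsum_extend _ 0 m). simpl. rewrite qmul_1_r. f_equal; lia. lia.
  intros i hi. destruct i. lia. apply qmul_0_r.
  intros i hi. do 2 f_equal. lia.
Qed.
Lemma starpow_comm b n m : star b (starpow b n) m = star (starpow b n) b m.
Proof.
  revert m; induction n; intros m.
  - simpl starpow. change (fun m0 : nat => match m0 with 0%nat => qone | S _ => qzero end) with delta0.
    rewrite star_delta_l, star_delta_r. auto.
  - simpl starpow. rewrite star_assoc. apply star_ext; intros; auto.
Qed.

Lemma starpow_vanish b (hb : b 0%nat = qzero) n m : (m < n)%nat -> starpow b n m = qzero.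
Proof.
  revert m; induction n; intros m hm. lia.
  simpl. unfold star. apply qsum_zero. intros k hk.
  destruct k. rewrite hb; apply qmul_0_l.
  rewrite IHn by lia. apply qmul_0_r.
Qed.

Definition cseq (a : nat -> H) : nat -> H := fun n => qconj (a n).

Lemma star_conj a b n : qconj (star a b n) = star (cseq b) (cseq a) n.
Proof.
  unfold star, cseq. rewrite qsum_conj. rewrite qsum_rev. apply qsum_ext_le; intros.
  rewrite qconj_mul. do 3 f_equal. lia.
Qed.

Lemma starpow0 b : starpow b 0 = delta0. Proof. reflexivity. Qed.

Definition shiftd (a : nat -> H) : nat -> H := fun n => a (S n).

Section Rec.
Variable b : nat -> H.
Hypothesis hb : b 0%nat = qzero.

Lemma star_b_0 g : star b g 0 = qzero.
Proof. unfold star; simpl. rewrite hb; apply qmul_0_l. Qed.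
Lemma star_r_b_0 g : star g b 0 = qzero.
Proof. unfold star; simpl. rewrite hb; apply qmul_0_r. Qed.

Lemma Cop_0 a : Cop b a 0 = a 0%nat.
Proof. unfold Cop; simpl. apply qmul_1_l. Qed.
Lemma Dop_0 a : Dop b a 0 = a 0%nat.
Proof. unfold Dop; simpl. apply qmul_1_r. Qed.

Lemma Cop_S a m : Cop b a (S m) = star b (Cop b (shiftd a)) (S m).
Proof.
  unfold Cop at 1. rewrite qsum_shift.
  change (starpow b 0 (S m)) with qzero. rewrite qmul_0_l, qadd_0_l.
  transitivity (qsum (fun n => qsum (fun k => qmul (b k) (qmul (starpow b n (S m - k)%nat) (a (S n)))) (S m)) (S m)).
  - rewrite (qsum_extend _ m (S m)); [ | lia | ].
    + apply qsum_ext_le; intros n hn. simpl starpow. unfold star. rewrite qsum_mul_r.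
      apply qsum_ext_le; intros. apply eq_sym, qmul_assoc.
    + intros i hi. assert (i = S m) by lia. subst. apply qsum_zero. intros k hk.
      destruct k. rewrite hb; apply qmul_0_l.
      rewrite (starpow_vanish b hb (S m)) by lia. rewrite qmul_0_l; apply qmul_0_r.
  - rewrite qsum_swap. unfold star. apply qsum_ext_le; intros k hk.
    unfold Cop. rewrite qsum_mul_l.
    apply qsum_extend. lia. intros i hi. rewrite (starpow_vanish b hb i) by lia.
    rewrite qmul_0_l; apply qmul_0_r.
Qed.

Lemma Dop_S a m : Dop b a (S m) = star (Dop b (shiftd a)) b (S m).
Proof.
  unfold Dop at 1. rewrite qsum_shift.
  change (starpow b 0 (S m)) with qzero. rewrite qmul_0_r, qadd_0_l.
  transitivity (qsum (fun n => qsum (fun k => qmul (qmul (a (S n)) (starpow b n k)) (b (S m - k)%nat)) (S m)) (S m)).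
  - rewrite (qsum_extend _ m (S m)); [ | lia | ].
    + apply qsum_ext_le; intros n hn. simpl starpow. rewrite starpow_comm. unfold star. rewrite qsum_mul_l.
      apply qsum_ext_le; intros. apply qmul_assoc.
    + intros i hi. assert (i = S m) by lia. subst. apply qsum_zero. intros k hk.
      destruct (Nat.eq_dec k (S m)).
      * subst. replace (S m - S m)%nat with 0%nat by lia. rewrite hb; apply qmul_0_r.
      * rewrite (starpow_vanish b hb (S m)) by lia. rewrite qmul_0_r; apply qmul_0_l.
  - rewrite qsum_swap. unfold star. apply qsum_ext_le; intros k hk.
    unfold Dop. rewrite qsum_mul_r.
    apply qsum_extend. lia. intros i hi. rewrite (starpow_vanish b hb i) by lia.
    rewrite qmul_0_r; apply qmul_0_l.
Qed.
End Rec.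

Fixpoint rsum (f : nat -> R) (N : nat) : R :=
  match N with O => 0 | S n => rsum f n + f n end.

Lemma rsum_plus f g N : rsum (fun s => f s + g s) N = rsum f N + rsum g N.
Proof. induction N; simpl; [lra|rewrite IHN; lra]. Qed.
Lemma rsum_scal c f N : rsum (fun s => c * f s) N = c * rsum f N.
Proof. induction N; simpl; [lra|rewrite IHN; lra]. Qed.
Lemma rsum_ext f g N : (forall s, f s = g s) -> rsum f N = rsum g N.
Proof. intros h; induction N; simpl; auto. rewrite IHN, h; auto. Qed.
Lemma rsum_const c N : rsum (fun _ => c) N = INR N * c.
Proof. induction N; simpl rsum. simpl; lra. rewrite IHN, S_INR; lra. Qed.
Lemma rsum_sum_swap (F : nat -> nat -> R) N D :
  rsum (fun s => sum_f_R0 (fun n => F s n) D) N = sum_f_R0 (fun n => rsum (fun s => F s n) N) D.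
Proof.
  induction N; simpl rsum.
  - rewrite sum_zero; auto.
  - rewrite IHN. rewrite <- sum_plus. auto.
Qed.
Lemma rsum_le f g N : (forall s, f s <= g s) -> rsum f N <= rsum g N.
Proof. intros h; induction N; simpl; [lra|]. pose proof (h N); lra. Qed.

Lemma tele_cos x N : 2 * sin (x/2) * rsum (fun s => cos (INR s * x)) N = sin ((INR N - 1/2) * x) + sin (x/2).
Proof.
  induction N; simpl rsum.
  - simpl INR. replace ((0 - 1/2) * x) with (- (x/2)) by field. rewrite sin_neg. lra.
  - rewrite Rmult_plus_distr_l, IHN. rewrite S_INR.
    replace ((INR N + 1 - 1/2) * x) with (INR N * x + x/2) by field.
    replace ((INR N - 1/2) * x) with (INR N * x - x/2) by field.
    rewrite sin_plus, sin_minus. ring.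
Qed.
Lemma tele_sin x N : 2 * sin (x/2) * rsum (fun s => sin (INR s * x)) N = cos (x/2) - cos ((INR N - 1/2) * x).
Proof.
  induction N; simpl rsum.
  - simpl INR. replace ((0 - 1/2) * x) with (- (x/2)) by field. rewrite cos_neg. lra.
  - rewrite Rmult_plus_distr_l, IHN. rewrite S_INR.
    replace ((INR N + 1 - 1/2) * x) with (INR N * x + x/2) by field.
    replace ((INR N - 1/2) * x) with (INR N * x - x/2) by field.
    rewrite cos_plus, cos_minus. ring.
Qed.

Definition th (N s : nat) : R := 2 * PI * INR s / INR N.

Lemma trig_sums N m : (0 < m < N)%nat ->
  rsum (fun s => cos (INR m * th N s)) N = 0 /\ rsum (fun s => sin (INR m * th N s)) N = 0.
Proof.
  intros hm. set (x := 2 * PI * INR m / INR N).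
  assert (hN : 0 < INR N) by (apply lt_0_INR; lia).
  assert (hm0 : 0 < INR m) by (apply lt_0_INR; lia).
  assert (hmN : INR m < INR N) by (apply lt_INR; lia).
  assert (E : forall s, INR m * th N s = INR s * x) by (intros; unfold th, x; field; lra).
  assert (hs : 0 < sin (x/2)).
  { assert (ht0 : 0 < INR m / INR N) by (apply Rdiv_lt_0_compat; lra).
    assert (ht1 : INR m / INR N < 1) by (apply Rmult_lt_reg_r with (INR N); [lra|]; field_simplify; lra).
    replace (x/2) with (PI * (INR m / INR N)) by (unfold x; field; lra).
    pose proof PI_RGT_0. apply sin_gt_0; nra. }
  assert (E2 : (INR N - 1/2) * x = - (x/2) + 2 * INR m * PI) by (unfold x; field; lra).
  split.
  - pose proof (tele_cos x N) as T. rewrite E2, sin_period, sin_neg in T.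
    rewrite (rsum_ext _ (fun s => cos (INR s * x))) by (intros; rewrite E; auto). nra.
  - pose proof (tele_sin x N) as T. rewrite E2, cos_period, cos_neg in T.
    rewrite (rsum_ext _ (fun s => sin (INR s * x))) by (intros; rewrite E; auto). nra.
Qed.

Lemma trig_sums_int N n k : (n < N)%nat -> (k < N)%nat ->
  rsum (fun s => cos ((INR n - INR k) * th N s)) N = (if Nat.eq_dec n k then INR N else 0) /\
  rsum (fun s => sin ((INR n - INR k) * th N s)) N = 0.
Proof.
  intros hn hk. destruct (Nat.eq_dec n k).
  - subst. split.
    + rewrite (rsum_ext _ (fun _ => 1)). rewrite rsum_const; lra. intros; replace (INR k - INR k) with 0 by ring. rewrite Rmult_0_l; apply cos_0.
    + rewrite (rsum_ext _ (fun _ => 0)). rewrite rsum_const; lra. intros; replace (INR k - INR k) with 0 by ring. rewrite Rmult_0_l; apply sin_0.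
  - destruct (Nat.lt_ge_cases n k) as [h|h].
    + destruct (trig_sums N (k - n)) as [A B]. lia.
      rewrite minus_INR in A, B by lia. split.
      * rewrite <- A. apply rsum_ext; intros. rewrite <- cos_neg. f_equal; ring.
      * rewrite (rsum_ext _ (fun s => -1 * sin ((INR k - INR n) * th N s))).
        rewrite rsum_scal, B; ring.
        intros. replace (-1 * sin ((INR k - INR n) * th N s)) with (- sin ((INR k - INR n) * th N s)) by ring.
        rewrite <- sin_neg. f_equal; ring.
    + destruct (trig_sums N (n - k)) as [A B]. lia.
      rewrite minus_INR in A, B by lia. split; auto.
Qed.

Definition zc (r t : R) : H := mkH (r * cos t) (r * sin t) 0 0.

Lemma qpow_zc r t n : qpow (zc r t) n = zc (r ^ n) (INR n * t).
Proof.
  induction n.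
  - simpl. unfold zc. rewrite Rmult_0_l, cos_0, sin_0. apply Hext; simpl; ring.
  - simpl qpow. rewrite IHn. rewrite S_INR. unfold zc. apply Hext; simpl.
    + replace ((INR n + 1) * t) with (t + INR n * t) by ring. rewrite cos_plus. ring.
    + replace ((INR n + 1) * t) with (t + INR n * t) by ring. rewrite sin_plus. ring.
    + ring. + ring.
Qed.

Lemma qdot_cplx a b a' b' c d :
  qdot (qmul (mkH a b 0 0) c) (qmul (mkH a' b' 0 0) d) =
  (a * a' + b * b') * qdot c d + (a' * b - a * b') * qdot (qmul qi c) d.
Proof. destruct c, d; unfold qdot, qmul, qi; simpl; ring. Qed.

Lemma parseval c D N r : (D < N)%nat ->
  rsum (fun s => qn2 (psum c (zc r (th N s)) D)) N =
  INR N * sum_f_R0 (fun n => r ^ n * r ^ n * qn2 (c n)) D.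
Proof.
  intros hD. unfold psum.
  rewrite (rsum_ext _ (fun s => sum_f_R0 (fun n => sum_f_R0 (fun k =>
     r ^ n * r ^ k * (cos ((INR n - INR k) * th N s) * qdot (c n) (c k) +
                      sin ((INR n - INR k) * th N s) * qdot (qmul qi (c n)) (c k))) D) D)).
  2: { intros s. rewrite qn2_qsum. apply sum_eq; intros n _. apply sum_eq; intros k _.
       rewrite !qpow_zc. unfold zc. rewrite qdot_cplx.
       replace ((INR n - INR k) * th N s) with (INR n * th N s - INR k * th N s) by ring.
       rewrite cos_minus, sin_minus. ring. }
  rewrite rsum_sum_swap. rewrite sum_scal_l. apply sum_eq; intros n hn.
  rewrite rsum_sum_swap.
  assert (HL : forall k, rsum (fun s => r ^ n * r ^ k * (cos ((INR n - INR k) * th N s) * qdot (c n) (c k) +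
                      sin ((INR n - INR k) * th N s) * qdot (qmul qi (c n)) (c k))) N =
     r ^ n * r ^ k * (qdot (c n) (c k) * rsum (fun s => cos ((INR n - INR k) * th N s)) N +
                      qdot (qmul qi (c n)) (c k) * rsum (fun s => sin ((INR n - INR k) * th N s)) N)).
  { intros k. rewrite <- !rsum_scal, <- rsum_plus, <- rsum_scal. apply rsum_ext; intros; ring. }
  rewrite (sum_ext_le _ (fun k => r ^ n * r ^ k * (qdot (c n) (c k) * rsum (fun s => cos ((INR n - INR k) * th N s)) N +
                      qdot (qmul qi (c n)) (c k) * rsum (fun s => sin ((INR n - INR k) * th N s)) N)))
    by (intros; apply HL).
  rewrite (sum_single _ D n); auto.
  - destruct (trig_sums_int N n n) as [A B]; try lia. rewrite A, B.
    destruct (Nat.eq_dec n n); [|congruence]. rewrite qdot_self. ring.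
  - intros k hk hkn. destruct (trig_sums_int N n k) as [A B]; try lia. rewrite A, B.
    destruct (Nat.eq_dec n k); [congruence|]. ring.
Qed.

Lemma qsub_tri x y z : qnorm (qsub x z) <= qnorm (qsub x y) + qnorm (qsub y z).
Proof. replace (qsub x z) with (qadd (qsub x y) (qsub y z)) by qeq. apply qnorm_triang. Qed.
Lemma qnorm_sub_le x y : qnorm x <= qnorm y + qnorm (qsub x y).
Proof. replace x with (qadd y (qsub x y)) at 1 by qeq. apply qnorm_triang. Qed.
Lemma qsub_self x : qsub x x = qzero. Proof. qeq. Qed.
Lemma qnorm_zero : qnorm qzero = 0. Proof. rewrite qnorm_sqrt, qn2_zero; apply sqrt_0. Qed.
Lemma qnorm_eq0 x : qnorm x = 0 -> x = qzero.
Proof. intro h. apply qn2_eq0. rewrite <- qnorm_sq, h. ring. Qed.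

Lemma small_zero x : 0 <= x -> (forall eps, eps > 0 -> x < eps) -> x = 0.
Proof. intros h1 h2. destruct (Rle_lt_or_eq_dec 0 x h1); auto. specialize (h2 x r). lra. Qed.

Lemma qcv_unique u l1 l2 : qcv u l1 -> qcv u l2 -> l1 = l2.
Proof.
  intros h1 h2.
  assert (E : qnorm (qsub l1 l2) = 0).
  { apply small_zero. apply qnorm_ge0. intros eps he.
    destruct (h1 (eps/2)) as [N1 H1]; [lra|]. destruct (h2 (eps/2)) as [N2 H2]; [lra|].
    specialize (H1 (max N1 N2)%nat ltac:(lia)). specialize (H2 (max N1 N2)%nat ltac:(lia)).
    pose proof (qsub_tri l1 (u (max N1 N2)) l2). rewrite qnorm_sub_comm in H1. lra. }
  apply qnorm_eq0 in E. replace l1 with (qadd (qsub l1 l2) l2) by qeq. rewrite E. apply qadd_0_l.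
Qed.

Lemma qcv_ext u v l : (forall n, u n = v n) -> qcv u l -> qcv v l.
Proof. intros e h eps he. destruct (h eps he) as [N HN]. exists N; intros; rewrite <- e; auto. Qed.

Lemma qcv_lin (f : H -> H) k u l : 0 <= k -> (forall x y, qnorm (qsub (f x) (f y)) <= k * qnorm (qsub x y)) ->
  qcv u l -> qcv (fun n => f (u n)) (f l).
Proof.
  intros hk hf h eps he. destruct (h (eps / (k + 1))) as [N HN].
  apply Rdiv_lt_0_compat; lra.
  exists N; intros n hn. specialize (HN n hn). eapply Rle_lt_trans. apply hf.
  apply Rle_lt_trans with ((k+1) * qnorm (qsub (u n) l)).
  pose proof (qnorm_ge0 (qsub (u n) l)); nra.
  apply Rmult_lt_reg_l with (/ (k+1)). apply Rinv_0_lt_compat; lra.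
  rewrite <- Rmult_assoc, Rinv_l, Rmult_1_l by lra. unfold Rdiv in HN. lra.
Qed.

Lemma qcv_mul_l c u l : qcv u l -> qcv (fun n => qmul c (u n)) (qmul c l).
Proof.
  apply (qcv_lin (qmul c) (qnorm c)). apply qnorm_ge0. intros x y.
  replace (qsub (qmul c x) (qmul c y)) with (qmul c (qsub x y)) by qeq. rewrite qnorm_mul; lra.
Qed.
Lemma qcv_mul_r c u l : qcv u l -> qcv (fun n => qmul (u n) c) (qmul l c).
Proof.
  apply (qcv_lin (fun x => qmul x c) (qnorm c)). apply qnorm_ge0. intros x y.
  replace (qsub (qmul x c) (qmul y c)) with (qmul (qsub x y) c) by qeq. rewrite qnorm_mul; lra.
Qed.
Lemma qcv_add u v l m : qcv u l -> qcv v m -> qcv (fun n => qadd (u n) (v n)) (qadd l m).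
Proof.
  intros h1 h2 eps he. destruct (h1 (eps/2)) as [N1 H1]; [lra|]. destruct (h2 (eps/2)) as [N2 H2]; [lra|].
  exists (max N1 N2); intros n hn. specialize (H1 n ltac:(lia)). specialize (H2 n ltac:(lia)).
  replace (qsub (qadd (u n) (v n)) (qadd l m)) with (qadd (qsub (u n) l) (qsub (v n) m)) by qeq.
  eapply Rle_lt_trans. apply qnorm_triang. lra.
Qed.

Lemma qcv_norm_le u l B : qcv u l -> (forall n, qnorm (u n) <= B) -> qnorm l <= B.
Proof.
  intros h hB. apply Rle_plus_epsilon. intros eps he. destruct (h eps he) as [N HN].
  specialize (HN N (le_n _)). pose proof (qnorm_sub_le l (u N)). rewrite qnorm_sub_comm in HN.
  specialize (hB N). lra.
Qed.

Lemma qcv_bounded u l : qcv u l -> exists B, forall n, qnorm (u n) <= B.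
Proof.
  intros h. destruct (h 1) as [N HN]; [lra|].
  exists (qnorm l + 1 + sum_f_R0 (fun i => qnorm (u i)) N). intros n.
  assert (Hs : forall m, 0 <= sum_f_R0 (fun i => qnorm (u i)) m) by (intros; apply sum_ge0; intros; apply qnorm_ge0).
  destruct (Compare_dec.le_lt_dec N n).
  - specialize (HN n l0). pose proof (qnorm_sub_le (u n) l). pose proof (Hs N). lra.
  - assert (qnorm (u n) <= sum_f_R0 (fun i => qnorm (u i)) N).
    { assert (G : forall M, (n <= M)%nat -> qnorm (u n) <= sum_f_R0 (fun i => qnorm (u i)) M).
      { induction M; intros hM. assert (n = 0%nat) by lia; subst; simpl; lra.
        simpl. destruct (Nat.eq_dec n (S M)).
        - subst. pose proof (Hs M). lra.
        - pose proof (IHM ltac:(lia)). pose proof (qnorm_ge0 (u (S M))). lra. }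
      apply G; lia. }
    pose proof (qnorm_ge0 l). lra.
Qed.

Lemma qnorm_qpow q n : qnorm (qpow q n) = qnorm q ^ n.
Proof.
  induction n; simpl. rewrite qnorm_sqrt. unfold qn2; simpl. replace (1*1+0*0+0*0+0*0) with 1 by ring. apply sqrt_1.
  rewrite qnorm_mul, IHn; auto.
Qed.

Definition wk_reg (psi : nat -> H) : Prop := forall q, qnorm q < 1 -> exists l, ps_value psi q l.

Lemma qnorm_qR r : 0 <= r -> qnorm (qR r) = r.
Proof. intros h. rewrite qnorm_sqrt. unfold qn2, qR; simpl. replace (r*r+0*0+0*0+0*0) with (r*r) by ring. apply sqrt_square; auto. Qed.

Lemma psum_S psi q n : psum psi q (S n) = qadd (psum psi q n) (qmul (qpow q (S n)) (psi (S n))).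
Proof. reflexivity. Qed.

Lemma coef_bound psi : wk_reg psi -> forall r, 0 <= r < 1 -> exists C, 0 <= C /\ forall n, r ^ n * qnorm (psi n) <= C.
Proof.
  intros hw r hr. destruct (hw (qR r)) as [l hl]. rewrite qnorm_qR; lra.
  destruct (qcv_bounded _ _ hl) as [B HB].
  assert (B0 : 0 <= B) by (pose proof (HB 0%nat); pose proof (qnorm_ge0 (psum psi (qR r) 0)); lra).
  exists (2 * B). split. lra. intros n.
  assert (E : r ^ n * qnorm (psi n) = qnorm (qmul (qpow (qR r) n) (psi n))) by (rewrite qnorm_mul, qnorm_qpow, qnorm_qR; lra).
  rewrite E. destruct n.
  - pose proof (HB 0%nat) as HB0. change (psum psi (qR r) 0) with (qmul (qpow (qR r) 0) (psi 0%nat)) in HB0. lra.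
  - replace (qmul (qpow (qR r) (S n)) (psi (S n))) with (qsub (psum psi (qR r) (S n)) (psum psi (qR r) n)) by (rewrite psum_S; qeq).
    rewrite qsub_add. eapply Rle_trans. apply qnorm_triang. rewrite qnorm_opp. pose proof (HB n); pose proof (HB (S n)). lra.
Qed.

Lemma tail_small psi : wk_reg psi -> forall r, 0 <= r < 1 -> forall eps, eps > 0 ->
  exists K0, forall K, (K0 <= K)%nat -> forall q l, qnorm q <= r -> ps_value psi q l -> qnorm (qsub l (psum psi q K)) <= eps.
Proof.
  intros hw r hr eps he.
  set (r' := (1 + r) / 2). assert (hr' : 0 < r' < 1) by (unfold r'; lra).
  assert (hrr : r < r') by (unfold r'; lra).
  destruct (coef_bound psi hw r' ltac:(lra)) as [C [C0 HC]].
  set (rho := r / r'). assert (hrho : 0 <= rho < 1).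
  { unfold rho. split. apply Rmult_le_pos; [lra|]. left; apply Rinv_0_lt_compat; lra.
    apply Rmult_lt_reg_r with r'; [lra|]. unfold Rdiv. rewrite Rmult_assoc, Rinv_l; lra. }
  assert (Hterm : forall q n, qnorm q <= r -> qnorm (qmul (qpow q n) (psi n)) <= C * rho ^ n).
  { intros q n hq. rewrite qnorm_mul, qnorm_qpow.
    assert (r ^ n = rho ^ n * r' ^ n).
    { rewrite <- Rpow_mult_distr. f_equal. unfold rho. field. lra. }
    apply Rle_trans with (r ^ n * qnorm (psi n)).
    apply Rmult_le_compat_r. apply qnorm_ge0. apply pow_incr. split; [apply qnorm_ge0|auto].
    rewrite H. specialize (HC n). pose proof (pow_le rho n ltac:(lra)). pose proof (qnorm_ge0 (psi n)).
    rewrite Rmult_assoc. rewrite (Rmult_comm C). apply Rmult_le_compat_l; auto. }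
  assert (Hpart : forall q K M, qnorm q <= r -> (K <= M)%nat ->
     qnorm (qsub (psum psi q M) (psum psi q K)) <= C * (rho ^ (S K) - rho ^ (S M)) / (1 - rho)).
  { intros q K M hq hKM. induction hKM.
    - rewrite qsub_self, qnorm_zero. replace (C * (rho ^ S K - rho ^ S K) / (1 - rho)) with 0 by (field; lra). lra.
    - rewrite psum_S. replace (qsub (qadd (psum psi q m) (qmul (qpow q (S m)) (psi (S m)))) (psum psi q K))
        with (qadd (qsub (psum psi q m) (psum psi q K)) (qmul (qpow q (S m)) (psi (S m)))) by qeq.
      eapply Rle_trans. apply qnorm_triang. specialize (Hterm q (S m) hq).
      replace (C * (rho ^ S K - rho ^ S (S m)) / (1 - rho)) with (C * (rho ^ S K - rho ^ S m) / (1 - rho) + C * rho ^ S m)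
        by (simpl; field; lra). lra. }
  destruct (pow_lt_1_zero rho ltac:(rewrite Rabs_right; lra) (eps * (1 - rho) / (C + 1))) as [K0 HK0].
  { apply Rdiv_lt_0_compat; nra. }
  exists K0. intros K hK q l hq hl.
  apply Rle_plus_epsilon. intros d hd. destruct (hl d hd) as [M HM].
  specialize (HM (max M K) ltac:(lia)). rewrite qnorm_sub_comm in HM.
  pose proof (qsub_tri l (psum psi q (max M K)) (psum psi q K)).
  specialize (Hpart q K (max M K) hq ltac:(lia)).
  specialize (HK0 (S K) ltac:(lia)). rewrite Rabs_right in HK0 by (apply Rle_ge, pow_le; lra).
  pose proof (pow_le rho (S (max M K)) ltac:(lra)).
  assert (C * (rho ^ S K - rho ^ S (max M K)) / (1 - rho) <= eps).
  { apply Rmult_le_reg_r with (1 - rho). lra. unfold Rdiv. rewrite Rmult_assoc, Rinv_l by lra.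
    apply Rle_trans with (C * rho ^ S K). nra.
    assert (rho ^ S K * (C + 1) <= eps * (1 - rho)).
    { apply Rmult_le_reg_r with (/ (C+1)). apply Rinv_0_lt_compat; lra.
      rewrite Rmult_assoc, Rinv_r by lra. unfold Rdiv in HK0. lra. }
    pose proof (pow_le rho (S K) ltac:(lra)). nra. }
  lra.
Qed.

Lemma Y_pow Y q z n : qmul Y q = qmul z Y -> qmul Y (qpow q n) = qmul (qpow z n) Y.
Proof.
  intros h. induction n; simpl. rewrite qmul_1_l, qmul_1_r; auto.
  rewrite qmul_assoc, h, <- qmul_assoc, IHn. apply qmul_assoc.
Qed.

Lemma Y_psum Y q z psi K : qmul Y q = qmul z Y ->
  qmul Y (psum psi q K) = qsum (fun l => qmul (qpow z l) (qmul Y (psi l))) K.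
Proof.
  intros h. unfold psum. rewrite qsum_mul_l. apply qsum_ext_le; intros l _.
  rewrite qmul_assoc, (Y_pow Y q z l h). apply eq_sym, qmul_assoc.
Qed.

Definition qinv (Y : H) : H := qscal (/ qn2 Y) (qconj Y).
Lemma qinv_l Y : qn2 Y <> 0 -> qmul (qinv Y) Y = qone.
Proof.
  intros h. destruct Y as [a b c d]. unfold qinv, qn2 in *; simpl in *. apply Hext; simpl; field; auto.
Qed.
Lemma qinv_r Y : qn2 Y <> 0 -> qmul Y (qinv Y) = qone.
Proof.
  intros h. destruct Y as [a b c d]. unfold qinv, qn2 in *; simpl in *. apply Hext; simpl; field; auto.
Qed.
Lemma qn2_qinv Y : qn2 Y <> 0 -> qn2 (qinv Y) = / qn2 Y.
Proof.
  intros h. destruct Y as [a b c d]. unfold qinv, qn2 in *; simpl in *. field; auto.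
Qed.

Lemma conjugator Y z : qn2 Y <> 0 ->
  let q := qmul (qinv Y) (qmul z Y) in qmul Y q = qmul z Y /\ qnorm q = qnorm z.
Proof.
  intros h q. split.
  - unfold q. rewrite qmul_assoc, qinv_r, qmul_1_l; auto.
  - unfold q. rewrite !qnorm_sqrt, !qn2_mul, qn2_qinv by auto. f_equal. field; auto.
Qed.

Lemma qpow_cplx a b n : q2 (qpow (mkH a b 0 0) n) = 0 /\ q3 (qpow (mkH a b 0 0) n) = 0 /\
  qpow (mkH a (-b) 0 0) n = qconj (qpow (mkH a b 0 0) n).
Proof.
  induction n; simpl. split; [auto|split; [auto|]]. apply Hext; simpl; ring.
  destruct IHn as [A [B C]]. rewrite C. destruct (qpow (mkH a b 0 0) n) as [x y u v]. simpl in *. subst.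
  split; [ring|split; [ring|]]. apply Hext; simpl; ring.
Qed.

Definition w1 (Y : H) : H := mkH (q0 Y) (q1 Y) 0 0.
Definition w2j (Y : H) : H := mkH 0 0 (q2 Y) (q3 Y).

Lemma Y_split_psum Y q a b psi N : qmul Y q = qmul (mkH a b 0 0) Y ->
  qmul Y (psum psi q N) = qadd (qmul (w1 Y) (psum psi (mkH a b 0 0) N)) (qmul (w2j Y) (psum psi (mkH a (-b) 0 0) N)).
Proof.
  intros h. rewrite (Y_psum Y q (mkH a b 0 0)) by auto. unfold psum. rewrite !qsum_mul_l, <- qsum_add.
  apply qsum_ext_le; intros n _. destruct (qpow_cplx a b n) as [A [B C]]. rewrite C.
  destruct (qpow (mkH a b 0 0) n) as [x y u v]. simpl in A, B. subst. destruct Y, (psi n).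
  unfold w1, w2j. apply Hext; unfold qmul, qconj; simpl; ring.
Qed.

Lemma Y_exists q : exists Y, qn2 Y <> 0 /\
  qmul Y q = qmul (mkH (q0 q) (sqrt (q1 q * q1 q + q2 q * q2 q + q3 q * q3 q)) 0 0) Y.
Proof.
  destruct q as [x u v w]; simpl. set (s := sqrt (u*u+v*v+w*w)).
  assert (hs : s * s = u*u+v*v+w*w) by (unfold s; apply sqrt_sqrt; nra).
  assert (hs0 : 0 <= s) by apply sqrt_pos.
  destruct (Req_dec (s + u) 0) as [e|ne].
  - assert (v = 0 /\ w = 0) as [-> ->] by nra.
    exists qj. split. unfold qn2, qj; simpl; lra.
    apply Hext; unfold qj, qmul; simpl; nra.
  - exists (mkH (s + u) 0 w (- v)). split. unfold qn2; simpl. nra.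
    apply Hext; unfold qmul; simpl; nra.
Qed.

Definition trunc (a : nat -> H) (m : nat) : nat -> H := fun n => if Nat.leb n m then a n else qzero.

Lemma trunc_le a m n : (n <= m)%nat -> trunc a m n = a n.
Proof. intros h; unfold trunc. destruct (Nat.leb_spec n m); auto; lia. Qed.
Lemma trunc_gt a m n : (m < n)%nat -> trunc a m n = qzero.
Proof. intros h; unfold trunc. destruct (Nat.leb_spec n m); auto; lia. Qed.

Lemma psum_trunc psi K D q : (K <= D)%nat -> psum (trunc psi K) q D = psum psi q K.
Proof.
  intros h. unfold psum. rewrite (qsum_extend _ K D h).
  apply qsum_ext_le; intros; rewrite trunc_le; auto.
  intros i hi. rewrite trunc_gt by lia. apply qmul_0_r.
Qed.

Lemma qpow_add z k l : qpow z (k + l) = qmul (qpow z k) (qpow z l).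
Proof. induction k; simpl. rewrite qmul_1_l; auto. rewrite IHk. apply qmul_assoc. Qed.

Lemma star_eval g psi m K z :
  psum (star (trunc g m) (trunc psi K)) z (m + K) =
  qsum (fun l => qmul (qpow z l) (qmul (psum (trunc g m) z (m + K)) (trunc psi K l))) (m + K).
Proof.
  set (D := (m + K)%nat).
  set (F := fun k l => qmul (qpow z (k + l)) (qmul (trunc g m k) (trunc psi K l))).
  transitivity (qsum (fun n => qsum (fun k => F k (n - k)%nat) n) D).
  - unfold psum, star. apply qsum_ext_le; intros n hn. rewrite qsum_mul_l. apply qsum_ext_le; intros k hk.
    unfold F. f_equal. f_equal. lia.
  - rewrite qsum_triangle.
    transitivity (qsum (fun k => qsum (fun l => F k l) D) D).
    + apply qsum_ext_le; intros k hk. symmetry. apply qsum_extend. lia.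
      intros l hl. unfold F. destruct (Nat.le_gt_cases k m).
      * rewrite (trunc_gt psi K l) by (unfold D in *; lia). rewrite qmul_0_r; apply qmul_0_r.
      * rewrite (trunc_gt g m k) by lia. rewrite qmul_0_l; apply qmul_0_r.
    + rewrite qsum_swap. apply qsum_ext_le; intros l hl. unfold psum.
      rewrite qsum_mul_r, qsum_mul_l. apply qsum_ext_le; intros k hk. unfold F.
      rewrite Nat.add_comm, qpow_add, !qmul_assoc. reflexivity.
Qed.

Definition reg1 (psi : nat -> H) : Prop := forall q, qnorm q < 1 -> exists l, ps_value psi q l /\ qnorm l <= 1.

Lemma qnorm_zc r t : 0 <= r -> qnorm (zc r t) = r.
Proof.
  intros h. rewrite qnorm_sqrt. unfold qn2, zc; simpl.
  replace (r * cos t * (r * cos t) + r * sin t * (r * sin t) + 0 * 0 + 0 * 0) with (r * r * (Rsqr (sin t) + Rsqr (cos t))) by (unfold Rsqr; ring).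
  rewrite sin2_cos2, Rmult_1_r. apply sqrt_square; auto.
Qed.

Lemma pointwise psi g m K r eps t : reg1 psi -> 0 <= r < 1 -> 0 <= eps ->
  (forall q l, qnorm q <= r -> ps_value psi q l -> qnorm (qsub l (psum psi q K)) <= eps) ->
  qn2 (psum (star (trunc g m) (trunc psi K)) (zc r t) (m + K)) <=
  (1 + eps) * (1 + eps) * qn2 (psum (trunc g m) (zc r t) (m + K)).
Proof.
  intros hreg hr he htail. rewrite star_eval.
  set (Y := psum (trunc g m) (zc r t) (m + K)).
  destruct (Req_dec (qn2 Y) 0) as [e|ne].
  - apply qn2_eq0 in e. rewrite e, qsum_zero. rewrite qn2_zero. pose proof (qn2_ge0 qzero). nra.
    intros; rewrite qmul_0_l; apply qmul_0_r.
  - destruct (conjugator Y (zc r t) ne) as [h1 h2].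
    set (q := qmul (qinv Y) (qmul (zc r t) Y)) in *.
    rewrite <- (Y_psum Y q (zc r t) (trunc psi K) (m + K) h1).
    rewrite psum_trunc by lia. rewrite qn2_mul.
    rewrite (qnorm_zc r t) in h2 by lra.
    destruct (hreg q ltac:(lra)) as [l [hl hl1]].
    specialize (htail q l ltac:(lra) hl).
    assert (HH : qnorm (psum psi q K) <= 1 + eps).
    { pose proof (qnorm_sub_le (psum psi q K) l) as T. rewrite (qnorm_sub_comm (psum psi q K)) in T. lra. }
    apply qnorm_le_qn2 in HH. pose proof (qn2_ge0 Y). rewrite (Rmult_comm (qn2 Y)).
    apply Rmult_le_compat_r; lra.
Qed.

Lemma stepA psi g m K r eps : reg1 psi -> 0 <= r < 1 -> 0 <= eps -> (m <= K)%nat ->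
  (forall q l, qnorm q <= r -> ps_value psi q l -> qnorm (qsub l (psum psi q K)) <= eps) ->
  sum_f_R0 (fun n => r ^ n * r ^ n * qn2 (star g psi n)) m <=
  (1 + eps) * (1 + eps) * sum_f_R0 (fun n => r ^ n * r ^ n * qn2 (g n)) m.
Proof.
  intros hreg hr he hmK htail.
  set (D := (m + K)%nat).
  assert (HN : 0 < INR (S D)) by (apply lt_0_INR; lia).
  pose proof (parseval (star (trunc g m) (trunc psi K)) D (S D) r ltac:(lia)) as P1.
  pose proof (parseval (trunc g m) D (S D) r ltac:(lia)) as P2.
  assert (Hle : rsum (fun s => qn2 (psum (star (trunc g m) (trunc psi K)) (zc r (th (S D) s)) D)) (S D) <=
                (1 + eps) * (1 + eps) * rsum (fun s => qn2 (psum (trunc g m) (zc r (th (S D) s)) D)) (S D)).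
  { rewrite <- rsum_scal. apply rsum_le. intros s. apply pointwise; auto. }
  rewrite P1, P2 in Hle.
  assert (E1 : sum_f_R0 (fun n => r ^ n * r ^ n * qn2 (star g psi n)) m <=
               sum_f_R0 (fun n => r ^ n * r ^ n * qn2 (star (trunc g m) (trunc psi K) n)) D).
  { rewrite (sum_ext_le (fun n => r ^ n * r ^ n * qn2 (star g psi n)) (fun n => r ^ n * r ^ n * qn2 (star (trunc g m) (trunc psi K) n))).
    apply sum_mono. intros; pose proof (qn2_ge0 (star (trunc g m) (trunc psi K) i)); pose proof (pow2_ge_0 (r ^ i)); simpl in *; nra.
    unfold D; lia.
    intros n hn. do 2 f_equal. apply star_ext; intros; rewrite ?trunc_le by lia; auto. }
  assert (E2 : sum_f_R0 (fun n => r ^ n * r ^ n * qn2 (trunc g m n)) D =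
               sum_f_R0 (fun n => r ^ n * r ^ n * qn2 (g n)) m).
  { unfold D. clear. induction K. rewrite Nat.add_0_r. apply sum_eq. intros; rewrite trunc_le; auto.
    rewrite Nat.add_succ_r. simpl. rewrite IHK, trunc_gt by lia. rewrite qn2_zero. ring. }
  rewrite E2 in Hle.
  assert (HH : INR (S D) * sum_f_R0 (fun n => r ^ n * r ^ n * qn2 (star g psi n)) m <=
               INR (S D) * ((1 + eps) * (1 + eps) * sum_f_R0 (fun n => r ^ n * r ^ n * qn2 (g n)) m)) by nra.
  apply Rmult_le_reg_l in HH; auto.
Qed.

Lemma reg1_wk psi : reg1 psi -> wk_reg psi.
Proof. intros h q hq. destruct (h q hq) as [l [hl _]]; eauto. Qed.

Lemma stepB psi g m r : reg1 psi -> 0 <= r < 1 ->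
  sum_f_R0 (fun n => r ^ n * r ^ n * qn2 (star g psi n)) m <=
  sum_f_R0 (fun n => r ^ n * r ^ n * qn2 (g n)) m.
Proof.
  intros hreg hr. set (y := sum_f_R0 (fun n => r ^ n * r ^ n * qn2 (g n)) m).
  assert (hy : 0 <= y) by (apply sum_ge0; intros; pose proof (qn2_ge0 (g i)); pose proof (pow2_ge_0 (r ^ i)); simpl in *; nra).
  apply Rle_plus_epsilon. intros d hd.
  set (eps := Rmin 1 (d / (3 * y + 1))).
  assert (he : 0 < eps <= 1). { unfold eps. split. apply Rmin_pos. lra. apply Rdiv_lt_0_compat; lra. apply Rmin_l. }
  assert (he2 : eps * (3 * y + 1) <= d).
  { apply Rle_trans with (d / (3 * y + 1) * (3 * y + 1)). apply Rmult_le_compat_r. lra. apply Rmin_r.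
    right; field; lra. }
  destruct (tail_small psi (reg1_wk psi hreg) r hr eps ltac:(lra)) as [K0 HK0].
  pose proof (stepA psi g m (max m K0) r eps hreg hr ltac:(lra) ltac:(lia) (HK0 (max m K0) ltac:(lia))) as HA.
  fold y in HA. nra.
Qed.

Lemma pow_le_one r n : 0 <= r <= 1 -> r ^ n <= 1.
Proof. intros h. rewrite <- (pow1 n). apply pow_incr; lra. Qed.

Lemma pow_decr r i m : 0 <= r <= 1 -> (i <= m)%nat -> r ^ m <= r ^ i.
Proof.
  intros hr h. replace m with (i + (m - i))%nat by lia. rewrite pow_add.
  pose proof (pow_le r i ltac:(lra)). pose proof (pow_le r (m - i) ltac:(lra)).
  assert (r ^ (m - i) <= 1) by (apply pow_le_one; lra). nra.
Qed.

Lemma bernoulli t k : 0 <= t <= 1 -> 1 - INR k * t <= (1 - t) ^ k.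
Proof.
  intros ht. induction k. simpl. lra.
  rewrite S_INR. simpl. pose proof (pow_le (1 - t) k ltac:(lra)).
  assert (A : (1 - t) * (1 - INR k * t) <= (1 - t) * (1 - t) ^ k) by (apply Rmult_le_compat_l; lra).
  pose proof (pos_INR k). nra.
Qed.

Lemma lemmaR psi g m : reg1 psi ->
  sum_f_R0 (fun n => qn2 (star g psi n)) m <= sum_f_R0 (fun n => qn2 (g n)) m.
Proof.
  intros hreg. set (X := sum_f_R0 (fun n => qn2 (star g psi n)) m).
  set (G := sum_f_R0 (fun n => qn2 (g n)) m).
  assert (hX : 0 <= X) by (apply sum_ge0; intros; apply qn2_ge0).
  assert (key : forall r, 0 <= r < 1 -> r ^ m * r ^ m * X <= G).
  { intros r hr. pose proof (stepB psi g m r hreg hr) as HB.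
    apply Rle_trans with (sum_f_R0 (fun n => r ^ n * r ^ n * qn2 (star g psi n)) m).
    - unfold X. rewrite sum_scal_l. apply sum_le; intros i hi.
      pose proof (qn2_ge0 (star g psi i)).
      assert (r ^ m <= r ^ i) by (apply pow_decr; [lra|lia]).
      pose proof (pow_le r m ltac:(lra)). assert (r ^ m * r ^ m <= r ^ i * r ^ i) by (apply Rmult_le_compat; lra). apply Rmult_le_compat_r; lra.
    - eapply Rle_trans. apply HB. unfold G. apply sum_le; intros i hi.
      pose proof (qn2_ge0 (g i)). assert (r ^ i <= 1) by (apply pow_le_one; lra).
      pose proof (pow_le r i ltac:(lra)). assert (r ^ i * r ^ i <= 1) by nra. rewrite <- (Rmult_1_l (qn2 (g i))) at 2. apply Rmult_le_compat_r; lra. }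
  apply Rle_plus_epsilon. intros d hd.
  set (t := d / (2 * INR m * X + 1 + d)).
  assert (hpos : 0 < 2 * INR m * X + 1 + d) by (pose proof (pos_INR m); nra).
  assert (ht : 0 < t < 1).
  { unfold t. split. apply Rdiv_lt_0_compat; lra. apply Rmult_lt_reg_r with (2 * INR m * X + 1 + d); auto.
    unfold Rdiv. rewrite Rmult_assoc, Rinv_l by lra. pose proof (pos_INR m). nra. }
  assert (ht2 : 2 * INR m * X * t <= d).
  { unfold t. apply Rle_trans with ((2 * INR m * X + 1 + d) * (d / (2 * INR m * X + 1 + d))).
    apply Rmult_le_compat_r. left; apply Rdiv_lt_0_compat; lra. pose proof (pos_INR m); nra. right; field; lra. }
  specialize (key (1 - t) ltac:(lra)).
  pose proof (bernoulli t m ltac:(lra)).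
  pose proof (pos_INR m).
  assert (1 - 2 * INR m * t <= (1 - t) ^ m * (1 - t) ^ m) by nra.
  nra.
Qed.

Record cx := Cx { re : R; im : R }.
Definition cmul (a b : cx) := Cx (re a * re b - im a * im b) (re a * im b + im a * re b).
Definition cadd (a b : cx) := Cx (re a + re b) (im a + im b).
Definition cn (a : cx) := re a * re a + im a * im a.
Definition ccj (a : cx) := Cx (re a) (- im a).

Definition rowQ (m11 m12 m21 m22 w1 w2 : cx) : R :=
  cn (cadd (cmul w1 m11) (cmul w2 m21)) + cn (cadd (cmul w1 m12) (cmul w2 m22)).
Definition colQ (m11 m12 m21 m22 v1 v2 : cx) : R :=
  cn (cadd (cmul m11 v1) (cmul m12 v2)) + cn (cadd (cmul m21 v1) (cmul m22 v2)).

Lemma cn_ge0 a : 0 <= cn a. Proof. unfold cn; nra. Qed.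

Lemma psd2 (h11 h22 hr hi : R) :
  (forall x1 x2 y1 y2, 0 <= h11 * (x1*x1+x2*x2) + h22 * (y1*y1+y2*y2) +
     2 * (hr * (x1*y1 + x2*y2) + hi * (x2*y1 - x1*y2))) ->
  0 <= h11 /\ 0 <= h22 /\ hr*hr + hi*hi <= h11 * h22.
Proof.
  intros h.
  assert (A : 0 <= h11) by (specialize (h 1 0 0 0); lra).
  assert (B : 0 <= h22) by (specialize (h 0 0 1 0); lra).
  split; auto. split; auto.
  destruct (Rle_lt_or_eq_dec 0 h22 B) as [hp|h0].
  -
    specialize (h h22 0 (- hr) hi).
    assert (E : h11 * (h22*h22+0*0) + h22 * (-hr*-hr+hi*hi) + 2 * (hr * (h22*-hr + 0*hi) + hi * (0*-hr - h22*hi))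
               = h22 * (h11 * h22 - (hr*hr+hi*hi))) by ring.
    rewrite E in h. apply Rmult_le_reg_l with h22; auto. nra.
  - subst h22. destruct (Req_dec (hr*hr+hi*hi) 0) as [e|ne].
    + lra.
    + exfalso. set (s := hr*hr+hi*hi). assert (sp : 0 < s) by (unfold s; nra).
      set (t := s / (h11 + 1)). assert (tp : 0 < t) by (unfold t; apply Rdiv_lt_0_compat; lra).
      specialize (h t 0 (- hr) hi).
      assert (E : h11 * (t*t+0*0) + 0 * (-hr*-hr+hi*hi) + 2 * (hr * (t*-hr + 0*hi) + hi * (0*-hr - t*hi)) = t * (h11 * t - 2 * s)) by (unfold s; ring).
      rewrite E in h. assert (h11 * t < 2 * s).
      { unfold t. apply Rle_lt_trans with (s). apply Rmult_le_reg_r with (h11 + 1). lra.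
        unfold Rdiv. field_simplify; nra. lra. }
      nra.
Qed.

Lemma psd2_conv (k11 k22 fr fi : R) : 0 <= k11 -> 0 <= k22 -> fr*fr + fi*fi <= k11 * k22 ->
  forall x1 x2 y1 y2, 0 <= k11 * (x1*x1+x2*x2) + k22 * (y1*y1+y2*y2) -
     2 * (fr * (x1*y1 + x2*y2) - fi * (x2*y1 - x1*y2)).
Proof.
  intros h1 h2 h3 x1 x2 y1 y2.
  set (a := x1*x1+x2*x2). set (b := y1*y1+y2*y2).
  set (X := fr * (x1*y1 + x2*y2) - fi * (x2*y1 - x1*y2)).
  assert (ha : 0 <= a) by (unfold a; nra). assert (hb : 0 <= b) by (unfold b; nra).
  assert (L : X * X <= (fr*fr+fi*fi) * (a * b)).
  { unfold X, a, b.
    assert (E : (fr*fr+fi*fi) * ((x1*x1+x2*x2) * (y1*y1+y2*y2)) - (fr * (x1*y1 + x2*y2) - fi * (x2*y1 - x1*y2)) * (fr * (x1*y1 + x2*y2) - fi * (x2*y1 - x1*y2))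
      = (fi * (x1*y1 + x2*y2) + fr * (x2*y1 - x1*y2))^2) by ring.
    pose proof (pow2_ge_0 (fi * (x1*y1 + x2*y2) + fr * (x2*y1 - x1*y2))). lra. }
  assert (L2 : X * X <= k11 * k22 * (a * b)).
  { apply Rle_trans with ((fr*fr+fi*fi) * (a * b)); auto. apply Rmult_le_compat_r; nra. }
  assert (L3 : 4 * (k11 * k22 * (a * b)) <= (k11 * a + k22 * b) * (k11 * a + k22 * b)).
  { assert (E : (k11 * a + k22 * b) * (k11 * a + k22 * b) - 4 * (k11 * k22 * (a * b)) = (k11 * a - k22 * b)^2) by ring.
    pose proof (pow2_ge_0 (k11 * a - k22 * b)). lra. }
  assert (S : 0 <= k11 * a + k22 * b) by nra.
  destruct (Rle_or_lt X 0). nra.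
  assert ((2 * X) * (2 * X) <= (k11 * a + k22 * b) * (k11 * a + k22 * b)) by nra.
  nra.
Qed.

Lemma row_col m11 m12 m21 m22 :
  (forall w1 w2, rowQ m11 m12 m21 m22 w1 w2 <= cn w1 + cn w2) ->
  forall v1 v2, colQ m11 m12 m21 m22 v1 v2 <= cn v1 + cn v2.
Proof.
  intros h v1 v2.
  destruct m11 as [a1 a2], m12 as [b1 b2], m21 as [c1 c2], m22 as [d1 d2].
  set (h11 := 1 - (a1*a1+a2*a2) - (b1*b1+b2*b2)).
  set (h22 := 1 - (c1*c1+c2*c2) - (d1*d1+d2*d2)).
  set (gr := a1*c1 + a2*c2 + b1*d1 + b2*d2).
  set (gi := a2*c1 - a1*c2 + b2*d1 - b1*d2).
  assert (HP : forall x1 x2 y1 y2, 0 <= h11 * (x1*x1+x2*x2) + h22 * (y1*y1+y2*y2) +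
     2 * ((- gr) * (x1*y1 + x2*y2) + gi * (x2*y1 - x1*y2))).
  { intros x1 x2 y1 y2. specialize (h (Cx x1 x2) (Cx y1 y2)). unfold rowQ, cn, cadd, cmul in h; simpl in h.
    unfold h11, h22, gr, gi. nra. }
  destruct (psd2 _ _ _ _ HP) as [P1 [P2 P3]].
  set (k11 := 1 - (a1*a1+a2*a2) - (c1*c1+c2*c2)).
  set (k22 := 1 - (b1*b1+b2*b2) - (d1*d1+d2*d2)).
  set (fr := a1*b1 + a2*b2 + c1*d1 + c2*d2).
  set (fi := a2*b1 - a1*b2 + c2*d1 - c1*d2).
  assert (T : k11 + k22 = h11 + h22) by (unfold k11, k22, h11, h22; ring).
  assert (D : k11 * k22 - (fr*fr+fi*fi) = h11 * h22 - (gr*gr + gi*gi)) by (unfold k11, k22, h11, h22, fr, fi, gr, gi; ring).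
  assert (K1 : 0 <= k11 /\ 0 <= k22).
  { assert (0 <= k11 * k22) by (pose proof (Rle_0_sqr fr); pose proof (Rle_0_sqr fi); unfold Rsqr in *; nra). nra. }
  destruct K1 as [K1 K2].
  pose proof (psd2_conv k11 k22 fr fi K1 K2 ltac:(lra) (re v1) (im v1) (re v2) (im v2)) as C.
  destruct v1 as [x1 x2], v2 as [y1 y2]. unfold colQ, cn, cadd, cmul; simpl in *.
  unfold k11, k22, fr, fi in C. nra.
Qed.

Definition Lam (P Q : H) : H := mkH (q0 Q) (- q1 Q) (- q2 P) (- q3 P).

Lemma bridge_row P Q Y :
  qn2 (qadd (qmul (w1 Y) P) (qmul (w2j Y) Q)) =
  rowQ (Cx (q0 P) (q1 P)) (Cx (q2 P) (q3 P)) (Cx (- q2 Q) (q3 Q)) (Cx (q0 Q) (- q1 Q)) (Cx (q0 Y) (q1 Y)) (Cx (q2 Y) (q3 Y)).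
Proof. destruct P, Q, Y; unfold qn2, w1, w2j, qmul, qadd, rowQ, cn, cadd, cmul; simpl; ring. Qed.

Lemma bridge_col P Q Y :
  qn2 (qadd (qmul (w1 Y) (Lam P Q)) (qmul (w2j Y) (Lam Q P))) =
  colQ (Cx (q0 P) (q1 P)) (Cx (q2 P) (q3 P)) (Cx (- q2 Q) (q3 Q)) (Cx (q0 Q) (- q1 Q)) (Cx (q2 Y) (q3 Y)) (Cx (- q0 Y) (- q1 Y)).
Proof. destruct P, Q, Y; unfold qn2, w1, w2j, qmul, qadd, Lam, colQ, cn, cadd, cmul; simpl; ring. Qed.

Lemma Lam_bound P Q : (forall W, qn2 (qadd (qmul (w1 W) P) (qmul (w2j W) Q)) <= qn2 W) ->
  forall Y, qn2 (qadd (qmul (w1 Y) (Lam P Q)) (qmul (w2j Y) (Lam Q P))) <= qn2 Y.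
Proof.
  intros h Y. rewrite bridge_col.
  assert (E : qn2 Y = cn (Cx (q2 Y) (q3 Y)) + cn (Cx (- q0 Y) (- q1 Y))) by (unfold qn2, cn; simpl; ring).
  rewrite E. apply row_col. intros [x1 x2] [y1 y2].
  specialize (h (mkH x1 x2 y1 y2)). rewrite bridge_row in h. unfold w1, w2j in h; simpl in h.
  unfold qn2 in h; unfold cn; simpl in *. lra.
Qed.

Lemma term_conj a b c n :
  qmul (qpow (mkH a b 0 0) n) (qconj c) = Lam (qmul (qpow (mkH a b 0 0) n) c) (qmul (qpow (mkH a (-b) 0 0) n) c).
Proof.
  destruct (qpow_cplx a b n) as [A [B C]]. rewrite C.
  destruct (qpow (mkH a b 0 0) n) as [x y u v]; simpl in A, B; subst. destruct c.
  apply Hext; unfold Lam, qmul, qconj; simpl; ring.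
Qed.

Lemma Lam_add P P' Q Q' : Lam (qadd P P') (qadd Q Q') = qadd (Lam P Q) (Lam P' Q').
Proof. apply Hext; unfold Lam, qadd; simpl; ring. Qed.

Lemma psum_conj_Lam phi a b N :
  psum (cseq phi) (mkH a b 0 0) N = Lam (psum phi (mkH a b 0 0) N) (psum phi (mkH a (-b) 0 0) N).
Proof.
  unfold psum, cseq. induction N; cbn [qsum].
  - apply term_conj.
  - rewrite IHN, Lam_add. f_equal. apply term_conj.
Qed.

Lemma qcv_Lam u v P Q : qcv u P -> qcv v Q -> qcv (fun n => Lam (u n) (v n)) (Lam P Q).
Proof.
  intros h1 h2 eps he. destruct (h1 (eps/2)) as [N1 H1]; [lra|]. destruct (h2 (eps/2)) as [N2 H2]; [lra|].
  exists (max N1 N2); intros n hn. specialize (H1 n ltac:(lia)). specialize (H2 n ltac:(lia)).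
  replace (qsub (Lam (u n) (v n)) (Lam P Q)) with (qadd (mkH 0 0 (- q2 (qsub (u n) P)) (- q3 (qsub (u n) P)))
     (mkH (q0 (qsub (v n) Q)) (- q1 (qsub (v n) Q)) 0 0)) by (apply Hext; unfold Lam, qsub, qadd; simpl; ring).
  eapply Rle_lt_trans. apply qnorm_triang.
  assert (A : qnorm (mkH 0 0 (- q2 (qsub (u n) P)) (- q3 (qsub (u n) P))) <= qnorm (qsub (u n) P)).
  { rewrite !qnorm_sqrt. apply sqrt_le_1_alt. unfold qn2; simpl.
    pose proof (Rle_0_sqr (q0 (u n) - q0 P)); pose proof (Rle_0_sqr (q1 (u n) - q1 P)); unfold Rsqr in *; lra. }
  assert (B : qnorm (mkH (q0 (qsub (v n) Q)) (- q1 (qsub (v n) Q)) 0 0) <= qnorm (qsub (v n) Q)).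
  { rewrite !qnorm_sqrt. apply sqrt_le_1_alt. unfold qn2; simpl.
    pose proof (Rle_0_sqr (q2 (v n) - q2 Q)); pose proof (Rle_0_sqr (q3 (v n) - q3 Q)); unfold Rsqr in *; lra. }
  lra.
Qed.

Lemma qnorm_zslice q : qnorm (mkH (q0 q) (sqrt (q1 q * q1 q + q2 q * q2 q + q3 q * q3 q)) 0 0) = qnorm q /\
  qnorm (mkH (q0 q) (- sqrt (q1 q * q1 q + q2 q * q2 q + q3 q * q3 q)) 0 0) = qnorm q.
Proof.
  assert (hs : sqrt (q1 q * q1 q + q2 q * q2 q + q3 q * q3 q) * sqrt (q1 q * q1 q + q2 q * q2 q + q3 q * q3 q)
    = q1 q * q1 q + q2 q * q2 q + q3 q * q3 q) by (apply sqrt_sqrt; nra).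
  split; rewrite !qnorm_sqrt; f_equal; unfold qn2; simpl; nra.
Qed.

Lemma qcv_psum_Y_identity Y q a b psi lq lz lzb :
  qmul Y q = qmul (mkH a b 0 0) Y ->
  ps_value psi q lq -> ps_value psi (mkH a b 0 0) lz -> ps_value psi (mkH a (-b) 0 0) lzb ->
  qmul Y lq = qadd (qmul (w1 Y) lz) (qmul (w2j Y) lzb).
Proof.
  intros hY h1 h2 h3. eapply qcv_unique.
  - apply (qcv_mul_l Y _ _ h1).
  - apply (qcv_ext (fun n => qadd (qmul (w1 Y) (psum psi (mkH a b 0 0) n)) (qmul (w2j Y) (psum psi (mkH a (-b) 0 0) n)))).
    intros n. symmetry. apply Y_split_psum; auto.
    apply qcv_add; apply qcv_mul_l; auto.
Qed.

Lemma conj_reg1 phi : regular_B_to_B phi -> reg1 (cseq phi).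
Proof.
  intros hphi q hq.
  destruct (Y_exists q) as [Y [hY0 hY]].
  set (s := sqrt (q1 q * q1 q + q2 q * q2 q + q3 q * q3 q)) in *.
  destruct (qnorm_zslice q) as [nz nzb]. fold s in nz, nzb.
  destruct (hphi (mkH (q0 q) s 0 0) ltac:(lra)) as [P [hP _]].
  destruct (hphi (mkH (q0 q) (- s) 0 0) ltac:(lra)) as [Q [hQ _]].
  assert (Hrow : forall W, qn2 (qadd (qmul (w1 W) P) (qmul (w2j W) Q)) <= qn2 W).
  { intros W. destruct (Req_dec (qn2 W) 0) as [e|ne].
    - apply qn2_eq0 in e. subst W. unfold w1, w2j; simpl.
      replace (qadd (qmul (mkH 0 0 0 0) P) (qmul (mkH 0 0 0 0) Q)) with qzero by (apply Hext; unfold qmul, qadd; simpl; ring).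
      rewrite qn2_zero; lra.
    - destruct (conjugator W (mkH (q0 q) s 0 0) ne) as [c1 c2].
      set (q' := qmul (qinv W) (qmul (mkH (q0 q) s 0 0) W)) in *.
      destruct (hphi q' ltac:(lra)) as [l' [hl' hl'1]].
      rewrite <- (qcv_psum_Y_identity W q' (q0 q) s phi l' P Q c1 hl' hP hQ).
      rewrite qn2_mul. apply Rlt_le, qnorm_le_qn2 in hl'1.
      pose proof (qn2_ge0 W). pose proof (qn2_ge0 l'). nra. }
  pose proof (Lam_bound P Q Hrow Y) as LB.
  exists (qmul (qinv Y) (qadd (qmul (w1 Y) (Lam P Q)) (qmul (w2j Y) (Lam Q P)))). split.
  - apply (qcv_ext (fun n => qmul (qinv Y) (qadd (qmul (w1 Y) (Lam (psum phi (mkH (q0 q) s 0 0) n) (psum phi (mkH (q0 q) (-s) 0 0) n)))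
                                             (qmul (w2j Y) (Lam (psum phi (mkH (q0 q) (-s) 0 0) n) (psum phi (mkH (q0 q) (- - s) 0 0) n)))))).
    + intros n. rewrite <- !psum_conj_Lam. rewrite <- (Y_split_psum Y q (q0 q) s (cseq phi) n hY).
      rewrite qmul_assoc, qinv_l, qmul_1_l; auto.
    + apply qcv_mul_l. apply qcv_add; apply qcv_mul_l; apply qcv_Lam; auto.
      rewrite Ropp_involutive. auto.
  - apply qn2_le_qnorm. lra. rewrite qn2_mul, qn2_qinv by auto.
    pose proof (qn2_ge0 Y).
    assert (0 < qn2 Y) by lra.
    apply Rmult_le_reg_l with (qn2 Y); auto. rewrite <- Rmult_assoc, Rinv_r by lra. lra.
Qed.

Lemma lemmaL phi h m : regular_B_to_B phi ->
  sum_f_R0 (fun n => qn2 (star phi h n)) m <= sum_f_R0 (fun n => qn2 (h n)) m.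
Proof.
  intros hphi.
  rewrite (sum_ext_le _ (fun n => qn2 (star (cseq h) (cseq phi) n))).
  rewrite (sum_ext_le (fun n => qn2 (h n)) (fun n => qn2 (cseq h n))).
  apply lemmaR. apply conj_reg1; auto.
  intros; unfold cseq; rewrite qn2_conj; auto.
  intros; rewrite <- star_conj, qn2_conj; auto.
Qed.

Lemma reg_reg1 phi : regular_B_to_B phi -> reg1 phi.
Proof. intros h q hq. destruct (h q hq) as [l [hl hl1]]. exists l; split; auto; lra. Qed.

Lemma sum_shift0 (f : nat -> R) m : sum_f_R0 f (S m) = f 0%nat + sum_f_R0 (fun i => f (S i)) m.
Proof. induction m. simpl; ring. rewrite tech5, IHm. simpl. ring. Qed.

Lemma star_trunc_l b g m N : b 0%nat = qzero -> (N <= S m)%nat -> star b g N = star b (trunc g m) N.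
Proof.
  intros hb hN. unfold star. apply qsum_ext_le; intros k hk. destruct k.
  rewrite hb, !qmul_0_l; auto. rewrite trunc_le by lia. auto.
Qed.
Lemma star_trunc_r b g m N : b 0%nat = qzero -> (N <= S m)%nat -> star g b N = star (trunc g m) b N.
Proof.
  intros hb hN. unfold star. apply qsum_ext_le; intros k hk. destruct (Nat.eq_dec k N).
  subst. replace (N - N)%nat with 0%nat by lia. rewrite hb, !qmul_0_r; auto. rewrite trunc_le by lia. auto.
Qed.

Lemma sum_trunc g m : sum_f_R0 (fun n => qn2 (trunc g m n)) (S m) = sum_f_R0 (fun n => qn2 (g n)) m.
Proof. rewrite tech5. rewrite trunc_gt by lia. rewrite qn2_zero, Rplus_0_r. apply sum_eq; intros; rewrite trunc_le; auto. Qed.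

Lemma Cop_partial b : regular_B_to_B b -> b 0%nat = qzero ->
  forall m a, sum_f_R0 (fun n => qn2 (Cop b a n)) m <= sum_f_R0 (fun n => qn2 (a n)) m.
Proof.
  intros hphi hb. induction m; intros a.
  - simpl. rewrite Cop_0; auto; lra.
  - rewrite !sum_shift0. rewrite Cop_0 by auto.
    set (g := Cop b (shiftd a)).
    rewrite (sum_ext_le _ (fun i => qn2 (star b (trunc g m) (S i)))).
    2: { intros i hi. rewrite Cop_S by auto. fold g. rewrite (star_trunc_l b g m) by (auto; lia). auto. }
    assert (A : qn2 (star b (trunc g m) 0) + sum_f_R0 (fun i => qn2 (star b (trunc g m) (S i))) m <=
                sum_f_R0 (fun n => qn2 (trunc g m n)) (S m)).
    { rewrite <- (sum_shift0 (fun n => qn2 (star b (trunc g m) n))). apply lemmaL; auto. }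
    rewrite sum_trunc in A. rewrite star_b_0, qn2_zero in A by auto.
    specialize (IHm (shiftd a)). fold g in IHm. unfold shiftd in IHm. lra.
Qed.

Lemma Dop_partial b : regular_B_to_B b -> b 0%nat = qzero ->
  forall m a, sum_f_R0 (fun n => qn2 (Dop b a n)) m <= sum_f_R0 (fun n => qn2 (a n)) m.
Proof.
  intros hphi hb. induction m; intros a.
  - simpl. rewrite Dop_0; auto; lra.
  - rewrite !sum_shift0. rewrite Dop_0 by auto.
    set (g := Dop b (shiftd a)).
    rewrite (sum_ext_le _ (fun i => qn2 (star (trunc g m) b (S i)))).
    2: { intros i hi. rewrite Dop_S by auto. fold g. rewrite (star_trunc_r b g m) by (auto; lia). auto. }
    assert (A : qn2 (star (trunc g m) b 0) + sum_f_R0 (fun i => qn2 (star (trunc g m) b (S i))) m <=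
                sum_f_R0 (fun n => qn2 (trunc g m n)) (S m)).
    { rewrite <- (sum_shift0 (fun n => qn2 (star (trunc g m) b n))). apply lemmaR; auto. apply reg_reg1; auto. }
    rewrite sum_trunc in A. rewrite star_r_b_0, qn2_zero in A by auto.
    specialize (IHm (shiftd a)). fold g in IHm. unfold shiftd in IHm. lra.
Qed.

Lemma sq_abs y : y * y = Rabs y * Rabs y.
Proof. rewrite <- Rabs_mult. symmetry. apply Rabs_right. nra. Qed.

Lemma qnorm_le_comps x : qnorm x <= Rabs (q0 x) + Rabs (q1 x) + Rabs (q2 x) + Rabs (q3 x).
Proof.
  pose proof (Rabs_pos (q0 x)); pose proof (Rabs_pos (q1 x)); pose proof (Rabs_pos (q2 x)); pose proof (Rabs_pos (q3 x)).
  apply qn2_le_qnorm. lra.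
  unfold qn2. rewrite (sq_abs (q0 x)), (sq_abs (q1 x)), (sq_abs (q2 x)), (sq_abs (q3 x)). nra.
Qed.

Lemma qcv_of_comps u l0 l1 l2 l3 :
  Un_cv (fun n => q0 (u n)) l0 -> Un_cv (fun n => q1 (u n)) l1 ->
  Un_cv (fun n => q2 (u n)) l2 -> Un_cv (fun n => q3 (u n)) l3 -> qcv u (mkH l0 l1 l2 l3).
Proof.
  intros h0 h1 h2 h3 eps he.
  destruct (h0 (eps/4)) as [N0 H0]; [lra|]. destruct (h1 (eps/4)) as [N1 H1]; [lra|].
  destruct (h2 (eps/4)) as [N2 H2]; [lra|]. destruct (h3 (eps/4)) as [N3 H3]; [lra|].
  exists (max (max N0 N1) (max N2 N3)). intros n hn.
  specialize (H0 n ltac:(lia)); specialize (H1 n ltac:(lia)); specialize (H2 n ltac:(lia)); specialize (H3 n ltac:(lia)).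
  unfold Rdist in *. eapply Rle_lt_trans. apply qnorm_le_comps. simpl. lra.
Qed.

Lemma series_cv_bound (t : nat -> R) C x : 0 <= x < 1 -> (forall n, Rabs (t n) <= C * x ^ n) ->
  exists l, Un_cv (fun N => sum_f_R0 t N) l.
Proof.
  intros hx ht.
  assert (G : { l : R | Un_cv (fun N => sum_f_R0 (fun n => C * x ^ n) N) l }).
  { exists (C * / (1 - x)). intros eps he.
    destruct (Req_dec C 0) as [e|ne].
    - exists 0%nat. intros n _. unfold Rdist. rewrite (sum_eq _ (fun _ => 0)). rewrite sum_cte. subst C.
      rewrite Rmult_0_l, Rmult_0_l, Rminus_0_r, Rabs_R0. lra. intros; subst; ring.
    - pose proof (GP_infinite x ltac:(rewrite Rabs_right; lra)) as GP.
      destruct (GP (eps / Rabs C)) as [N HN]. apply Rdiv_lt_0_compat; auto. apply Rabs_pos_lt; auto.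
      exists N; intros n hn. specialize (HN n hn). unfold Rdist in *.
      rewrite <- sum_scal_l.
      rewrite <- Rmult_minus_distr_l.
      rewrite Rabs_mult.
      rewrite (sum_eq (fun n => 1 * x ^ n) (fun i => x ^ i)) in HN by (intros; ring).
      assert (hC : 0 < Rabs C) by (apply Rabs_pos_lt; auto).
      replace eps with (Rabs C * (eps / Rabs C)) by (field; lra).
      apply Rmult_lt_compat_l; auto. }
  assert (A : { l : R | Un_cv (fun N => sum_f_R0 (fun n => Rabs (t n)) N) l }).
  { apply (Rseries_CV_comp _ (fun n => C * x ^ n)); auto. intros n; split; auto. apply Rabs_pos. }
  apply cv_cauchy_1 in A. apply cauchy_abs in A. apply cv_cauchy_2 in A. destruct A as [l hl]. eauto.
Qed.

Lemma reg_of_bounded c B : (forall n, qnorm (c n) <= B) -> regular_on_B c.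
Proof.
  intros hB q hq.
  assert (hb : forall n, qnorm (qmul (qpow q n) (c n)) <= B * qnorm q ^ n).
  { intros n. rewrite qnorm_mul, qnorm_qpow, Rmult_comm. apply Rmult_le_compat_r; auto.
    apply pow_le, qnorm_ge0. }
  assert (hx : 0 <= qnorm q < 1) by (split; auto; apply qnorm_ge0).
  destruct (series_cv_bound (fun n => q0 (qmul (qpow q n) (c n))) B (qnorm q) hx) as [l0 h0].
  { intros n; eapply Rle_trans; [apply qnorm_comp0|apply hb]. }
  destruct (series_cv_bound (fun n => q1 (qmul (qpow q n) (c n))) B (qnorm q) hx) as [l1 h1].
  { intros n; eapply Rle_trans; [apply qnorm_comp1|apply hb]. }
  destruct (series_cv_bound (fun n => q2 (qmul (qpow q n) (c n))) B (qnorm q) hx) as [l2 h2].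
  { intros n; eapply Rle_trans; [apply qnorm_comp2|apply hb]. }
  destruct (series_cv_bound (fun n => q3 (qmul (qpow q n) (c n))) B (qnorm q) hx) as [l3 h3].
  { intros n; eapply Rle_trans; [apply qnorm_comp3|apply hb]. }
  exists (mkH l0 l1 l2 l3). unfold ps_value, psum. apply qcv_of_comps.
  - eapply Un_cv_ext; [|exact h0]. intros; rewrite qsum_comp0; auto.
  - eapply Un_cv_ext; [|exact h1]. intros; rewrite qsum_comp1; auto.
  - eapply Un_cv_ext; [|exact h2]. intros; rewrite qsum_comp2; auto.
  - eapply Un_cv_ext; [|exact h3]. intros; rewrite qsum_comp3; auto.
Qed.

Lemma b0_zero b : ps_value b qzero qzero -> b 0%nat = qzero.
Proof.
  intros h. assert (E : forall N, psum b qzero N = b 0%nat).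
  { induction N. unfold psum; simpl. apply qmul_1_l.
    rewrite psum_S, IHN. simpl qpow. rewrite qmul_0_l, qmul_0_l. apply qadd_0_r. }
  apply (qcv_unique (psum b qzero)); auto.
  intros eps he. exists 0%nat. intros n _. rewrite E, qsub_self, qnorm_zero. lra.
Qed.

Lemma sum_qn2_eq a m : sum_f_R0 (fun n => qnorm (a n) ^ 2) m = sum_f_R0 (fun n => qn2 (a n)) m.
Proof. apply sum_eq; intros; apply qnorm_sq. Qed.

Lemma growing_sum a : Un_growing (sum_f_R0 (fun n => qnorm (a n) ^ 2)).
Proof. intros n. simpl. pose proof (pow2_ge_0 (qnorm (a (S n)))). lra. Qed.

Lemma H2_partial a ra : H2norm_is a ra -> forall m, sum_f_R0 (fun n => qn2 (a n)) m <= ra ^ 2.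
Proof.
  intros [h0 h] m. rewrite <- sum_qn2_eq. apply growing_ineq; auto. apply growing_sum.
Qed.

Lemma cv_const c : Un_cv (fun _ => c) c.
Proof. intros eps he. exists 0%nat. intros; unfold Rdist. rewrite Rminus_diag, Rabs_R0. lra. Qed.

Section T.
Variable T : (nat -> H) -> (nat -> H).
Hypothesis hT : forall m a, sum_f_R0 (fun n => qn2 (T a n)) m <= sum_f_R0 (fun n => qn2 (a n)) m.

Lemma T_ub a ra r : H2norm_is a ra -> H2norm_is (T a) r -> r <= ra.
Proof.
  intros ha [hr0 hr]. destruct ha as [ha0 hacv].
  assert (r ^ 2 <= ra ^ 2).
  { eapply Rle_cv_lim; [ | exact hr | apply (cv_const (ra ^ 2))].
    intros m. rewrite sum_qn2_eq. eapply Rle_trans. apply hT. apply H2_partial. split; auto. }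
  nra.
Qed.

Lemma T_H2 a : in_H2 a -> in_H2 (T a).
Proof.
  intros [hreg [ra hra]].
  assert (hb : forall m, sum_f_R0 (fun n => qnorm (T a n) ^ 2) m <= ra ^ 2).
  { intros m. rewrite sum_qn2_eq. eapply Rle_trans. apply hT. apply H2_partial; auto. }
  split.
  - apply (reg_of_bounded _ ra). intros n. destruct hra as [ra0 _]. apply qn2_le_qnorm; auto.
    specialize (hb n). rewrite sum_qn2_eq in hb.
    assert (qn2 (T a n) <= sum_f_R0 (fun n => qn2 (T a n)) n).
    { destruct n. simpl; lra. rewrite tech5. pose proof (sum_ge0 (fun n => qn2 (T a n)) n (fun i _ => qn2_ge0 _)). lra. }
    nra.
  - destruct (growing_cv _ (growing_sum (T a))) as [L hL].
    { exists (ra ^ 2). intros x [m ->]. apply hb. }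
    assert (L0 : 0 <= L).
    { pose proof (growing_ineq _ L (growing_sum (T a)) hL 0%nat). simpl in H. pose proof (pow2_ge_0 (qnorm (T a 0%nat))). lra. }
    exists (sqrt L). split. apply sqrt_pos.
    rewrite <- Rsqr_pow2, Rsqr_sqrt; auto.
Qed.

Lemma delta0_H2 : in_H2 delta0 /\ H2norm_is delta0 1.
Proof.
  assert (N : H2norm_is delta0 1).
  { split. lra. eapply Un_cv_ext; [|apply cv_const]. intros n.
    assert (Q1 : qnorm qone = 1) by (rewrite qnorm_sqrt; unfold qn2; simpl; replace (1*1+0*0+0*0+0*0) with 1 by ring; apply sqrt_1).
    induction n. cbn [sum_f_R0]. unfold delta0. rewrite Q1. ring.
    cbn [sum_f_R0]. rewrite <- IHn. unfold delta0. rewrite qnorm_zero. ring. }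
  split; auto. split; eauto. apply (reg_of_bounded _ 1). intros n; destruct n.
  apply qn2_le_qnorm. lra. unfold qn2; simpl; lra. unfold delta0. rewrite qnorm_zero; lra.
Qed.

Lemma T_lub (hd : forall m, T delta0 m = delta0 m) : is_lub (opnorm_set T) 1.
Proof.
  split.
  - intros r [a [ra [ha [hra [hra1 hr]]]]]. pose proof (T_ub a ra r hra hr). lra.
  - intros u hu. apply hu. exists delta0, 1. destruct delta0_H2 as [A B].
    split; auto. split; auto. split. lra.
    destruct B as [B0 B]. split; auto. eapply Un_cv_ext; [|exact B]. intros n. apply sum_eq; intros; rewrite hd; auto.
Qed.
End T.

Lemma Cop_delta b m : Cop b delta0 m = delta0 m.
Proof.
  unfold Cop. rewrite (qsum_extend _ 0 m). simpl. rewrite qmul_1_r. auto. lia.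
  intros i hi. destruct i. lia. apply qmul_0_r.
Qed.
Lemma Dop_delta b m : Dop b delta0 m = delta0 m.
Proof.
  unfold Dop. rewrite (qsum_extend _ 0 m). simpl. rewrite qmul_1_l. auto. lia.
  intros i hi. destruct i. lia. apply qmul_0_l.
Qed.

Theorem mainTheorem2 (b : nat -> H)
  (hphi : regular_B_to_B b) (hphi0 : ps_value b qzero qzero) :
  (forall a, in_H2 a -> in_H2 (Cop b a) /\ in_H2 (Dop b a)) /\
  is_lub (opnorm_set (Cop b)) 1 /\
  is_lub (opnorm_set (Dop b)) 1.
Proof.
  pose proof (b0_zero b hphi0) as hb.
  pose proof (fun m a => Cop_partial b hphi hb m a) as HC.
  pose proof (fun m a => Dop_partial b hphi hb m a) as HD.
  split; [|split].
  - intros a ha. split. apply (T_H2 (Cop b) HC a ha). apply (T_H2 (Dop b) HD a ha).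
  - apply (T_lub (Cop b) HC). apply Cop_delta.
  - apply (T_lub (Dop b) HD). apply Dop_delta.
Qed.
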